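(* Let $C=\operatorname{conv}(\gamma_1\cup\gamma_2)\subset\mathbb{R}^3$, where $\gamma_1(t)=(\cos t,\sin t,1)$ for $t\in[0,\pi/2]$ and $\gamma_2(t)=(\cos t,\sin t,-1)$ for $t\in[0,\pi]$, and let $K=\operatorname{cone}(C\times\{1\})\subset\mathbb{R}^4$. Then $K$ is facially dual complete, but the tangent cone $\mathcal{T}(\bar x;C)$ at $\bar x=(0,1,1)$ is not facially exposed; in particular $K$ is not strongly tangentially exposed. Thus strong tangential exposure is not necessary for facial dual completeness.
   Context: $\mathbb{R}^4$ is identified with its dual. $\operatorname{cone}(S)=\{\lambda s:\lambda\ge0,s\in\operatorname{conv}S\}$. Tangent cone: $\mathcal{T}(x;D)=\operatorname{cl}\{d: x+\epsilon d\in D\text{ for some }\epsilon>0\}$. A face of a closed convex set $D$ is a closed convex $F\subseteq D$ such that $x\in F$, $y,z\in D$, $x\in(y,z)$ imply $y,z\in F$; it is exposed if $F=D\cap H$ for some supporting hyperplane $H$; $D$ is facially exposed if every nonempty face $F\ne D$ is exposed. A closed convex cone $K$ is tangentially exposed if $\mathcal{T}(x;K)\cap\operatorname{span}F=\mathcal{T}(x;F)$ for all faces $F\ne K$, $x\in F$. Lexicographic tangent cones: cones obtained by iterating the tangent-cone operation (tangent cones of $K$, tangent cones of those, etc.); $K$ is strongly tangentially exposed if $K$ and all its lexicographic tangent cones are tangentially exposed. $K$ is facially dual complete if $K^*+F^\perp$ is closed for every nonempty face $F\ne K$, where $K^*=\{s:\langle s,x\rangle\ge0\ \forall x\in K\}$,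 $F^\perp=\{s:\langle s,x\rangle=0\ \forall x\in F\}$. *)

(* Defs.v *)
(* classical reals.  Vectors of R^n are represented as
   functions nat -> R vanishing at indices >= n (predicate inRn n). *)
From Stdlib Require Import Reals List.
Open Scope R_scope.

Definition Vec := nat -> R.
Definition VSet := Vec -> Prop.

Definition inRn (n : nat) (x : Vec) : Prop := forall i, (n <= i)%nat -> x i = 0.

Definition vzero : Vec := fun _ => 0.
Definition vadd (x y : Vec) : Vec := fun i => x i + y i.
Definition vscale (a : R) (x : Vec) : Vec := fun i => a * x i.

Fixpoint ip (n : nat) (x y : Vec) : R :=
  match n with
  | O => 0
  | S m => ip m x y + x m * y m
  end.

Definition vdist (n : nat) (x y : Vec) : R :=
  sqrt (ip n (vadd x (vscale (-1) y)) (vadd x (vscale (-1) y))).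

Definition lincomb (l : list (R * Vec)) : Vec :=
  fold_right (fun p acc => vadd (vscale (fst p) (snd p)) acc) vzero l.
Definition wsum (l : list (R * Vec)) : R :=
  fold_right (fun p acc => fst p + acc) 0 l.

Definition conv (S : VSet) : VSet := fun x =>
  exists l : list (R * Vec),
    Forall (fun p => 0 <= fst p /\ S (snd p)) l /\ wsum l = 1 /\ x = lincomb l.

Definition cone (S : VSet) : VSet := fun x =>
  exists lam s, 0 <= lam /\ conv S s /\ x = vscale lam s.

Definition span (S : VSet) : VSet := fun x =>
  exists l : list (R * Vec), Forall (fun p => S (snd p)) l /\ x = lincomb l.

Definition closure (n : nat) (D : VSet) : VSet := fun x =>
  inRn n x /\ forall eps, 0 < eps -> exists y, D y /\ vdist n x y < eps.

Definition closed (n : nat) (D : VSet) : Prop :=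
  forall x, closure n D x -> D x.

Definition convex (D : VSet) : Prop :=
  forall x y t, D x -> D y -> 0 <= t <= 1 ->
    D (vadd (vscale (1 - t) x) (vscale t y)).

Definition set_eq (A B : VSet) : Prop := forall x, A x <-> B x.

Definition tangent (n : nat) (x : Vec) (D : VSet) : VSet :=
  closure n (fun d => inRn n d /\ exists eps, 0 < eps /\ D (vadd x (vscale eps d))).

Definition in_open_seg (x y z : Vec) : Prop :=
  exists t, 0 < t < 1 /\ x = vadd (vscale (1 - t) y) (vscale t z).

Definition face (n : nat) (D F : VSet) : Prop :=
  closed n F /\ convex F /\ (forall x, F x -> D x) /\
  (forall x y z, F x -> D y -> D z -> in_open_seg x y z -> F y /\ F z).

Definition exposed (n : nat) (D F : VSet) : Prop :=
  exists (a : Vec) (b : R),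
    inRn n a /\ (exists i, (i < n)%nat /\ a i <> 0) /\
    (forall x, D x -> ip n a x >= b) /\
    (forall x, F x <-> (D x /\ ip n a x = b)).

Definition facially_exposed (n : nat) (D : VSet) : Prop :=
  forall F, face n D F -> (exists x, F x) -> ~ set_eq F D -> exposed n D F.

Definition dual (n : nat) (K : VSet) : VSet := fun s =>
  inRn n s /\ forall x, K x -> ip n s x >= 0.
Definition perp (n : nat) (F : VSet) : VSet := fun s =>
  inRn n s /\ forall x, F x -> ip n s x = 0.

Definition msum (A B : VSet) : VSet := fun z =>
  exists a b, A a /\ B b /\ z = vadd a b.

Definition facially_dual_complete (n : nat) (K : VSet) : Prop :=
  forall F, face n K F -> (exists x, F x) -> ~ set_eq F K ->
    closed n (msum (dual n K) (perp n F)).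

Definition tangentially_exposed (n : nat) (K : VSet) : Prop :=
  forall F x, face n K F -> ~ set_eq F K -> F x ->
    set_eq (fun d => tangent n x K d /\ span F d) (tangent n x F).

Inductive lex_tangent (n : nat) (K : VSet) : VSet -> Prop :=
  | lex_base : forall x, K x -> lex_tangent n K (tangent n x K)
  | lex_step : forall L x, lex_tangent n K L -> L x -> lex_tangent n K (tangent n x L).

Definition strongly_tangentially_exposed (n : nat) (K : VSet) : Prop :=
  tangentially_exposed n K /\
  forall L, lex_tangent n K L -> tangentially_exposed n L.

Definition vec3 (a b c : R) : Vec := fun i =>
  match i with O => a | 1%nat => b | 2%nat => c | _ => 0 end.
Definition vec4 (a b c d : R) : Vec := fun i =>
  match i with O => a | 1%nat => b | 2%nat => c | 3%nat => d | _ => 0 end.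

Definition gamma12 : VSet := fun x =>
  (exists t, 0 <= t <= PI / 2 /\ x = vec3 (cos t) (sin t) 1) \/
  (exists t, 0 <= t <= PI /\ x = vec3 (cos t) (sin t) (-1)).

Definition C_ex : VSet := conv gamma12.

Definition C_times_1 : VSet := fun x =>
  exists y, C_ex y /\ x = vec4 (y 0%nat) (y 1%nat) (y 2%nat) 1.

Definition K_ex : VSet := cone C_times_1.

Definition xbar : Vec := vec3 0 1 1.

(* Main.v *)
Require Import Defs.
From Stdlib Require Import Reals Lra Psatz List FunctionalExtensionality Classical.
Open Scope R_scope.

Lemma vext (x y : Vec) : (forall i, x i = y i) -> x = y.
Proof. intros; apply functional_extensionality; auto. Qed.

Lemma ip_add n a x y : ip n a (vadd x y) = ip n a x + ip n a y.
Proof. induction n; simpl; [lra|]. rewrite IHn; unfold vadd; ring. Qed.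
Lemma ip_scale n a c x : ip n a (vscale c x) = c * ip n a x.
Proof. induction n; simpl; [lra|]. rewrite IHn; unfold vscale; ring. Qed.
Lemma ip_zero n a : ip n a vzero = 0.
Proof. induction n; simpl; [lra|]. rewrite IHn; unfold vzero; ring. Qed.
Lemma ip_comm n a x : ip n a x = ip n x a.
Proof. induction n; simpl; [lra|]. rewrite IHn; ring. Qed.
Lemma ip_sq_ge n v : 0 <= ip n v v.
Proof. induction n; simpl; nra. Qed.
Lemma ip_coord_sq n v i : (i < n)%nat -> v i * v i <= ip n v v.
Proof.
  induction n; intros H; [lia|]. simpl.
  destruct (Nat.eq_dec i n) as [->|Hne].
  - pose proof (ip_sq_ge n v); lra.
  - assert (i < n)%nat by lia. specialize (IHn H0). nra.
Qed.
Lemma coord_le_vdist n x y i : (i < n)%nat -> Rabs (x i - y i) <= vdist n x y.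
Proof.
  intros H. unfold vdist.
  set (v := vadd x (vscale (-1) y)).
  assert (Hv : v i = x i - y i) by (unfold v, vadd, vscale; ring).
  rewrite <- Hv. rewrite <- sqrt_Rsqr_abs. apply sqrt_le_1_alt.
  unfold Rsqr. apply ip_coord_sq; auto.
Qed.

Fixpoint sabs (n : nat) (a : Vec) : R :=
  match n with O => 0 | S m => sabs m a + Rabs (a m) end.
Lemma sabs_ge n a : 0 <= sabs n a.
Proof. induction n; simpl; [lra|]. pose proof (Rabs_pos (a n)); lra. Qed.
Lemma ip_bound n a v B : (forall i, (i < n)%nat -> Rabs (v i) <= B) ->
  Rabs (ip n a v) <= sabs n a * B.
Proof.
  induction n; intros H; simpl.
  - rewrite Rabs_R0; lra.
  - assert (H1 : forall i, (i < n)%nat -> Rabs (v i) <= B) by (intros; apply H; lia).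
    specialize (IHn H1). specialize (H n (Nat.lt_succ_diag_r n)).
    eapply Rle_trans; [apply Rabs_triang|]. rewrite Rabs_mult.
    pose proof (Rabs_pos (a n)). nra.
Qed.

Lemma closure_ge n a (D : VSet) x :
  (forall y, D y -> ip n a y >= 0) -> closure n D x -> ip n a x >= 0.
Proof.
  intros HD [Hx Hc].
  destruct (Rlt_or_le (ip n a x) 0) as [Hlt|Hge]; [|lra].
  exfalso.
  set (eta := - ip n a x).
  set (M := sabs n a + 1).
  assert (HM : 0 < M) by (unfold M; pose proof (sabs_ge n a); lra).
  destruct (Hc (eta / M)) as [y [Dy Hd]].
  { unfold eta; apply Rdiv_lt_0_compat; lra. }
  specialize (HD y Dy).
  assert (Hb : Rabs (ip n a (vadd x (vscale (-1) y))) <= sabs n a * (eta / M)).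
  { apply ip_bound. intros i Hi. unfold vadd, vscale.
    replace (x i + -1 * y i) with (x i - y i) by ring.
    pose proof (coord_le_vdist n x y i Hi); lra. }
  rewrite ip_add, ip_scale in Hb.
  assert (Hs : sabs n a * (eta / M) < eta).
  { unfold M. pose proof (sabs_ge n a).
    assert (0 < eta) by (unfold eta; lra).
    apply Rmult_lt_reg_r with (sabs n a + 1); [lra|].
    unfold Rdiv. rewrite Rmult_assoc, (Rmult_assoc eta), Rinv_l; nra. }
  pose proof (Rle_abs (-(ip n a x + -1 * ip n a y))). rewrite Rabs_Ropp in H.
  unfold eta in *. lra.
Qed.

Lemma closure_self n (D : VSet) x : inRn n x -> D x -> closure n D x.
Proof.
  intros Hx Dx. split; auto. intros eps He. exists x. split; auto.
  unfold vdist. replace (ip n (vadd x (vscale (-1) x)) (vadd x (vscale (-1) x))) with 0.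
  rewrite sqrt_0; auto.
  replace (vadd x (vscale (-1) x)) with vzero. rewrite ip_zero; auto.
  apply vext; intro i; unfold vzero, vadd, vscale; ring.
Qed.

Definition top (c s : R) := c*c + s*s = 1 /\ 0 <= c /\ 0 <= s.
Definition bot (c s : R) := c*c + s*s = 1 /\ 0 <= s.

Lemma acos_le_half x : 0 <= x <= 1 -> acos x <= PI/2.
Proof.
  intros Hx. pose proof (acos_bound x). pose proof (cos_acos x ltac:(lra)).
  destruct (Rle_or_lt (acos x) (PI/2)) as [h|h]; auto.
  assert (cos (acos x) < 0) by (apply cos_lt_0; lra).
  destruct (Req_dec x 0) as [->|hx].
  - rewrite acos_0 in h; lra.
  - lra.
Qed.

Lemma gamma_top c s : top c s -> gamma12 (vec3 c s 1).
Proof.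
  intros [H1 [H2 H3]]. left.
  assert (Hc : -1 <= c <= 1) by nra.
  exists (acos c). split.
  - pose proof (acos_bound c). split; [lra|]. apply acos_le_half; nra.
  - rewrite cos_acos by lra. rewrite sin_acos by lra.
    replace (1 - c²) with (s*s) by (unfold Rsqr; lra).
    rewrite sqrt_square by lra. reflexivity.
Qed.

Lemma gamma_bot c s : bot c s -> gamma12 (vec3 c s (-1)).
Proof.
  intros [H1 H3]. right.
  assert (Hc : -1 <= c <= 1) by nra.
  exists (acos c). split.
  - apply acos_bound.
  - rewrite cos_acos by lra. rewrite sin_acos by lra.
    replace (1 - c²) with (s*s) by (unfold Rsqr; lra).
    rewrite sqrt_square by lra. reflexivity.
Qed.

Lemma gamma_inv g : gamma12 g -> exists c s,
  (top c s /\ g = vec3 c s 1) \/ (bot c s /\ g = vec3 c s (-1)).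
Proof.
  intros [[t [Ht ->]]|[t [Ht ->]]]; exists (cos t), (sin t).
  - left. split; auto. split; [pose proof (sin2_cos2 t); unfold Rsqr in *; lra|].
    split.
    + apply cos_ge_0; pose proof PI_RGT_0; lra.
    + apply sin_ge_0; lra.
  - right. split; auto. split; [pose proof (sin2_cos2 t); unfold Rsqr in *; lra|].
    apply sin_ge_0; lra.
Qed.

Lemma lincomb_app l1 l2 : lincomb (l1 ++ l2) = vadd (lincomb l1) (lincomb l2).
Proof.
  induction l1; simpl.
  - apply vext; intro i; unfold vadd, vzero; ring.
  - rewrite IHl1. apply vext; intro i; unfold vadd, vscale; ring.
Qed.
Lemma wsum_app l1 l2 : wsum (l1 ++ l2) = wsum l1 + wsum l2.
Proof. induction l1; simpl; [ring|]. rewrite IHl1; ring. Qed.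
Definition lscale (c : R) (l : list (R * Vec)) := map (fun p => (c * fst p, snd p)) l.
Lemma lincomb_scale c l : lincomb (lscale c l) = vscale c (lincomb l).
Proof.
  induction l; simpl.
  - apply vext; intro i; unfold vscale, vzero; ring.
  - rewrite IHl. apply vext; intro i; unfold vadd, vscale; simpl; ring.
Qed.
Lemma wsum_scale c l : wsum (lscale c l) = c * wsum l.
Proof. induction l; simpl; [ring|]. rewrite IHl; ring. Qed.
Lemma Forall_scale (P : Vec -> Prop) c l : 0 <= c ->
  Forall (fun p => 0 <= fst p /\ P (snd p)) l ->
  Forall (fun p => 0 <= fst p /\ P (snd p)) (lscale c l).
Proof.
  intros Hc H. induction H; simpl; constructor; auto.
  destruct H; simpl; split; auto. apply Rmult_le_pos; auto.
Qed.

Lemma conv_conv (G : VSet) x : conv (conv G) x -> conv G x.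
Proof.
  intros [l [Hf [Hw ->]]]. revert Hw.
  enough (forall W, wsum l = W -> exists l', Forall (fun p => 0 <= fst p /\ G (snd p)) l' /\
            wsum l' = W /\ lincomb l = lincomb l') as H.
  { intros Hw. destruct (H 1 Hw) as [l' [? [? ?]]]. exists l'; auto. }
  induction Hf as [|[w c] l [Hw0 Hc] Hf IH]; intros W HW; simpl in *.
  - exists nil; simpl; auto.
  - destruct Hc as [lc [Hfc [Hwc ->]]].
    destruct (IH (wsum l) eq_refl) as [l' [Hf' [Hw' He']]].
    exists (lscale w lc ++ l'). split; [apply Forall_app; split; auto; apply Forall_scale; auto|].
    split.
    + rewrite wsum_app, wsum_scale, Hwc, Hw'. lra.
    + rewrite lincomb_app, lincomb_scale, He'. reflexivity.
Qed.

Definition ipsum n a (l : list (R * Vec)) :=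
  fold_right (fun p acc => fst p * ip n a (snd p) + acc) 0 l.
Lemma ip_lincomb n a l : ip n a (lincomb l) = ipsum n a l.
Proof.
  induction l; simpl.
  - apply ip_zero.
  - rewrite ip_add, ip_scale, IHl; reflexivity.
Qed.
Lemma lincomb_ge n a (P : Vec -> Prop) beta l :
  Forall (fun p => 0 <= fst p /\ P (snd p)) l ->
  (forall e, P e -> ip n a e >= beta) ->
  ip n a (lincomb l) >= beta * wsum l.
Proof.
  intros Hf HP. rewrite ip_lincomb. induction Hf as [|[w e] l [H0 He] Hf IH]; simpl in *.
  - lra.
  - specialize (HP e He). nra.
Qed.

Definition L (c : Vec) : Vec := vec4 (c 0%nat) (c 1%nat) (c 2%nat) 1.

Ltac vcases := let i := fresh "i" in apply vext; intros [|[|[|[|i]]]];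
  simpl; unfold L, vec4, vec3, vadd, vscale, vzero; simpl; try ring.

Lemma C_gen g : gamma12 g -> C_ex g.
Proof.
  intros H. exists ((1, g) :: nil). split; [constructor; simpl; auto; split; [lra|auto]|].
  split; simpl; [ring|]. apply vext; intro i; unfold vadd, vscale, vzero; ring.
Qed.

Lemma C_comb c1 c2 t : C_ex c1 -> C_ex c2 -> 0 <= t <= 1 ->
  C_ex (vadd (vscale t c1) (vscale (1 - t) c2)).
Proof.
  intros H1 H2 Ht. apply conv_conv.
  exists ((t, c1) :: (1 - t, c2) :: nil). split.
  - constructor; [simpl; split; [lra|auto]|]. constructor; [simpl; split; [lra|auto]|]. constructor.
  - split; simpl; [ring|]. apply vext; intro i; unfold vadd, vscale, vzero; ring.
Qed.

Lemma Kchar w : K_ex w <-> exists lam c, 0 <= lam /\ C_ex c /\ w = vscale lam (L c).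
Proof.
  split.
  - intros [lam [s [Hl [Hs ->]]]]. exists lam.
    destruct Hs as [l [Hf [Hw ->]]].
    assert (H : forall W, wsum l = W -> exists l', Forall (fun p => 0 <= fst p /\ C_ex (snd p)) l' /\
      wsum l' = W /\ lincomb l = vec4 (lincomb l' 0%nat) (lincomb l' 1%nat) (lincomb l' 2%nat) W).
    { clear Hw. induction Hf as [|[w e] l [H0 He] Hf IH]; intros W HW; simpl in *.
      - exists nil; simpl; repeat split; auto. subst. vcases.
      - destruct He as [y [Hy ->]].
        destruct (IH (wsum l) eq_refl) as [l' [Hf' [Hw' He']]].
        exists ((w, y) :: l'). split; [constructor; auto|]. simpl. split; [lra|].
        rewrite He'. subst W. vcases. }
    destruct (H 1 Hw) as [l' [Hf' [Hw' He']]].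
    exists (lincomb l'). split; auto. split.
    + apply conv_conv. exists l'. repeat split; auto.
    + rewrite He'. reflexivity.
  - intros [lam [c [Hl [Hc ->]]]]. exists lam, (L c). split; auto. split; auto.
    exists ((1, L c) :: nil). split; [constructor; simpl; auto; split; [lra| exists c; split; auto]|].
    split; simpl; [ring|]. apply vext; intro i; unfold vadd, vscale, vzero; ring.
Qed.

Lemma K_scale mu a : 0 <= mu -> K_ex a -> K_ex (vscale mu a).
Proof.
  intros Hm Ha. apply Kchar in Ha. destruct Ha as [lam [c [Hl [Hc ->]]]].
  apply Kchar. exists (mu * lam), c. split; [nra|]. split; auto.
  apply vext; intro i; unfold vscale; ring.
Qed.

Lemma K_add a b : K_ex a -> K_ex b -> K_ex (vadd a b).
Proof.
  intros Ha Hb. apply Kchar in Ha, Hb.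
  destruct Ha as [l1 [c1 [H1 [Hc1 ->]]]]. destruct Hb as [l2 [c2 [H2 [Hc2 ->]]]].
  apply Kchar.
  destruct (Req_dec (l1 + l2) 0) as [Hz|Hz].
  - exists 0, c1. split; [lra|]. split; auto.
    assert (l1 = 0) by lra. assert (l2 = 0) by lra. subst.
    apply vext; intro i; unfold vadd, vscale; ring.
  - exists (l1 + l2), (vadd (vscale (l1/(l1+l2)) c1) (vscale (1 - l1/(l1+l2)) c2)).
    split; [lra|]. split.
    + apply C_comb; auto. split.
      * apply Rmult_le_pos; auto. left; apply Rinv_0_lt_compat; lra.
      * apply Rmult_le_reg_r with (l1 + l2); [lra|]. unfold Rdiv.
        rewrite Rmult_assoc, Rinv_l; lra.
    + vcases; field; auto.
Qed.

Lemma RB x y : x*x + y*y <= 1 -> 0 <= y -> C_ex (vec3 x y (-1)).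
Proof.
  intros H1 H2.
  assert (Hy : y <= 1) by nra.
  set (r := sqrt (1 - y*y)).
  assert (Hr0 : 0 <= r) by apply sqrt_pos.
  assert (Hr2 : r * r = 1 - y*y) by (apply sqrt_sqrt; nra).
  assert (Hx : - r <= x <= r).
  { split; apply Rsqr_le_abs_0 in H1 || idtac; nra. }
  assert (GA : C_ex (vec3 r y (-1))) by (apply C_gen, gamma_bot; split; nra).
  assert (GB : C_ex (vec3 (-r) y (-1))) by (apply C_gen, gamma_bot; split; nra).
  destruct (Req_dec r 0) as [Hr|Hr].
  - assert (x = 0) by lra. subst x. rewrite Hr in GA. exact GA.
  - set (t := (x + r) / (2 * r)).
    assert (Ht : 0 <= t <= 1).
    { unfold t. split.
      - apply Rmult_le_pos; [lra|]. left; apply Rinv_0_lt_compat; lra.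
      - apply Rmult_le_reg_r with (2*r); [lra|]. unfold Rdiv.
        rewrite Rmult_assoc, Rinv_l; lra. }
    replace (vec3 x y (-1)) with (vadd (vscale t (vec3 r y (-1))) (vscale (1 - t) (vec3 (-r) y (-1)))).
    + apply C_comb; auto.
    + vcases; unfold t; field; auto.
Qed.

Lemma RT x y : x*x + y*y <= 1 -> x + y >= 1 -> C_ex (vec3 x y 1).
Proof.
  intros H1 H2.
  assert (Hy0 : 0 <= y) by nra. assert (Hy : y <= 1) by nra.
  assert (Hx0 : 0 <= x) by nra.
  set (r := sqrt (1 - y*y)).
  assert (Hr0 : 0 <= r) by apply sqrt_pos.
  assert (Hr2 : r * r = 1 - y*y) by (apply sqrt_sqrt; nra).
  assert (Hxr : x <= r) by nra.
  assert (GA : C_ex (vec3 r y 1)) by (apply C_gen, gamma_top; split; nra).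
  assert (GP : C_ex (vec3 1 0 1)) by (apply C_gen, gamma_top; split; nra).
  assert (GQ : C_ex (vec3 0 1 1)) by (apply C_gen, gamma_top; split; nra).
  assert (GPQ : C_ex (vec3 (1 - y) y 1)).
  { replace (vec3 (1 - y) y 1) with (vadd (vscale (1 - y) (vec3 1 0 1)) (vscale (1 - (1 - y)) (vec3 0 1 1))).
    apply C_comb; auto; lra. vcases. }
  destruct (Req_dec (r - (1 - y)) 0) as [Hr|Hr].
  - assert (x = r) by lra. subst x. exact GA.
  - set (t := (x - (1 - y)) / (r - (1 - y))).
    assert (Hd : r - (1 - y) > 0) by lra.
    assert (Ht : 0 <= t <= 1).
    { unfold t. split.
      - apply Rmult_le_pos; [lra|]. left; apply Rinv_0_lt_compat; lra.
      - apply Rmult_le_reg_r with (r - (1 - y)); [lra|]. unfold Rdiv.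
        rewrite Rmult_assoc, Rinv_l; lra. }
    replace (vec3 x y 1) with (vadd (vscale t (vec3 r y 1)) (vscale (1 - t) (vec3 (1 - y) y 1))).
    + apply C_comb; auto.
    + vcases; unfold t; field; auto.
Qed.

Lemma ip_le_sabs2 n v : ip n v v <= sabs n v * sabs n v.
Proof.
  induction n; simpl; [lra|].
  pose proof (sabs_ge n v). pose proof (Rabs_pos (v n)).
  assert (v n * v n = Rabs (v n) * Rabs (v n)) by (rewrite <- Rabs_mult; rewrite Rabs_right; nra).
  nra.
Qed.
Lemma vdist_le_sabs n x y : vdist n x y <= sabs n (vadd x (vscale (-1) y)).
Proof.
  unfold vdist. rewrite <- (sqrt_square (sabs n _)) by apply sabs_ge.
  apply sqrt_le_1_alt. apply ip_le_sabs2.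
Qed.

Lemma tangent_valid n a beta x (D : VSet) :
  (forall y, D y -> ip n a y >= beta) -> ip n a x = beta ->
  forall d, tangent n x D d -> ip n a d >= 0.
Proof.
  intros HD Hx d Hd. eapply (closure_ge n a _ d); [|exact Hd].
  intros y [_ [eps [He Hy]]]. specialize (HD _ Hy).
  rewrite ip_add, ip_scale in HD. nra.
Qed.

Lemma C_valid a beta : (forall g, gamma12 g -> ip 3 a g >= beta) ->
  forall c, C_ex c -> ip 3 a c >= beta.
Proof.
  intros H c [l [Hf [Hw ->]]].
  pose proof (lincomb_ge 3 a gamma12 beta l Hf H). rewrite Hw in H0. lra.
Qed.

Lemma gen_valid3 a beta :
  (forall c s, top c s -> ip 3 a (vec3 c s 1) >= beta) ->
  (forall c s, bot c s -> ip 3 a (vec3 c s (-1)) >= beta) ->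
  forall c, C_ex c -> ip 3 a c >= beta.
Proof.
  intros Ht Hb. apply C_valid. intros g Hg.
  destruct (gamma_inv g Hg) as [c [s [[H ->]|[H ->]]]]; auto.
Qed.

Lemma T3_ineq1 d : tangent 3 xbar C_ex d -> d 1%nat <= 0.
Proof.
  intro H. pose proof (tangent_valid 3 (vec3 0 (-1) 0) (-1) xbar C_ex) as T.
  assert (ip 3 (vec3 0 (-1) 0) d >= 0).
  { apply T; auto.
    - apply gen_valid3; intros c s [? ?]; simpl; nra.
    - unfold xbar; simpl; ring. }
  simpl in H0. lra.
Qed.
Lemma T3_ineq2 d : tangent 3 xbar C_ex d -> d 2%nat <= 0.
Proof.
  intro H. pose proof (tangent_valid 3 (vec3 0 0 (-1)) (-1) xbar C_ex) as T.
  assert (ip 3 (vec3 0 0 (-1)) d >= 0).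
  { apply T; auto.
    - apply gen_valid3; intros c s [? ?]; simpl; nra.
    - unfold xbar; simpl; ring. }
  simpl in H0. lra.
Qed.

Lemma bot_ineq k c s : bot c s -> 0 <= 2*k*c + (1 - k*k) * (1 - s) + 2 * k * k.
Proof.
  intros [H1 H2].
  assert (((1-k*k)*s - 2*k*c) * ((1-k*k)*s - 2*k*c) <= (1+k*k)*(1+k*k)).
  { pose proof (Rle_0_sqr ((1-k*k)*c + 2*k*s)). unfold Rsqr in H. nra. }
  set (X := (1-k*k)*s - 2*k*c) in *.
  assert (X <= 1 + k*k).
  { destruct (Rle_or_lt X (1 + k*k)) as [h|h]; auto.
    assert (0 <= k*k) by nra. assert (0 < 1 + k*k) by lra. nra. }
  unfold X in H0. nra.
Qed.

Lemma T3_ineq3 d k : 0 < k <= 1 -> tangent 3 xbar C_ex d ->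
  2*k*d 0%nat - (1 - k*k) * d 1%nat - k*k * d 2%nat >= 0.
Proof.
  intros Hk H.
  pose proof (tangent_valid 3 (vec3 (2*k) (-(1-k*k)) (-(k*k))) (-(1-k*k) - k*k) xbar C_ex) as T.
  assert (ip 3 (vec3 (2*k) (-(1-k*k)) (-(k*k))) d >= 0).
  { apply T; auto.
    - apply gen_valid3; intros c s Hcs; simpl.
      + destruct Hcs as [? [? ?]]. assert (s <= 1) by nra. assert (0 <= 1 - k*k) by nra.
        assert (0 <= k*c) by nra. assert (0 <= (1-k*k)*(1-s)) by nra. nra.
      + pose proof (bot_ineq k c s Hcs). lra.
    - unfold xbar; simpl; ring. }
  simpl in H0. lra.
Qed.

Lemma small_k_pos p q : (forall k, 0 < k <= 1 -> 2*k*p - k*k*q >= 0) -> q <= 0 -> p >= 0.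
Proof.
  intros H Hq. destruct (Rlt_or_le p 0) as [Hp|Hp]; [|lra]. exfalso.
  set (k := Rmin 1 (-p / (1 - q))).
  assert (Hk : 0 < k <= 1).
  { unfold k. split; [apply Rmin_pos; [lra|apply Rdiv_lt_0_compat; lra]|apply Rmin_l]. }
  assert (Hk2 : k * (1 - q) <= -p).
  { unfold k. assert (Rmin 1 (-p/(1-q)) <= -p/(1-q)) by apply Rmin_r.
    apply Rmult_le_compat_r with (r := 1 - q) in H0; [|lra].
    unfold Rdiv in H0. rewrite Rmult_assoc, Rinv_l in H0; lra. }
  specialize (H k Hk). nra.
Qed.

Definition T3 := tangent 3 xbar C_ex.
Definition Fr : VSet := fun d => inRn 3 d /\ d 0%nat = 0 /\ d 1%nat = 0 /\ d 2%nat <= 0.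

Lemma inRn3_vec3 a b c : inRn 3 (vec3 a b c).
Proof. intros [|[|[|i]]] H; simpl; auto; lia. Qed.
Lemma inRn4_vec4 a b c d : inRn 4 (vec4 a b c d).
Proof. intros [|[|[|[|i]]]] H; simpl; auto; lia. Qed.
Lemma inRn3_eq d : inRn 3 d -> d = vec3 (d 0%nat) (d 1%nat) (d 2%nat).
Proof. intros H. apply vext; intros [|[|[|i]]]; simpl; auto. apply H; lia. Qed.
Lemma inRn4_eq d : inRn 4 d -> d = vec4 (d 0%nat) (d 1%nat) (d 2%nat) (d 3%nat).
Proof. intros H. apply vext; intros [|[|[|[|i]]]]; simpl; auto. apply H; lia. Qed.

Lemma in_T3 d eps : inRn 3 d -> 0 < eps -> C_ex (vadd xbar (vscale eps d)) -> T3 d.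
Proof. intros Hd He Hc. apply closure_self; auto. split; auto. exists eps; auto. Qed.

Lemma T3_inRn d : T3 d -> inRn 3 d.
Proof. intros [H _]; auto. Qed.

Lemma closure_coord3 (D : VSet) x p q r :
  (forall y, D y -> p * y 0%nat + q * y 1%nat + r * y 2%nat >= 0) -> closure 3 D x ->
  p * x 0%nat + q * x 1%nat + r * x 2%nat >= 0.
Proof.
  intros H Hx. pose proof (closure_ge 3 (vec3 p q r) D x) as T. simpl in T.
  assert (0 + p * x 0%nat + q * x 1%nat + r * x 2%nat >= 0); [|lra].
  apply T; auto. intros y Hy. specialize (H y Hy). lra.
Qed.

Lemma Fr_face : face 3 T3 Fr.
Proof.
  split; [|split; [|split]].
  - intros x Hx. split; [destruct Hx; auto|].
    pose proof (closure_coord3 Fr x 1 0 0) as H1.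
    pose proof (closure_coord3 Fr x (-1) 0 0) as H2.
    pose proof (closure_coord3 Fr x 0 1 0) as H3.
    pose proof (closure_coord3 Fr x 0 (-1) 0) as H4.
    pose proof (closure_coord3 Fr x 0 0 (-1)) as H5.
    assert (forall p q r, (forall y, Fr y -> p * y 0%nat + q * y 1%nat + r * y 2%nat >= 0) ->
       p * x 0%nat + q * x 1%nat + r * x 2%nat >= 0) as G by (intros; apply closure_coord3 with Fr; auto).
    pose proof (G 1 0 0 ltac:(intros y [_ [? [? ?]]]; nra)).
    pose proof (G (-1) 0 0 ltac:(intros y [_ [? [? ?]]]; nra)).
    pose proof (G 0 1 0 ltac:(intros y [_ [? [? ?]]]; nra)).
    pose proof (G 0 (-1) 0 ltac:(intros y [_ [? [? ?]]]; nra)).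
    pose proof (G 0 0 (-1) ltac:(intros y [_ [? [? ?]]]; nra)).
    repeat split; lra.
  - intros x y t [Hx [? [? ?]]] [Hy [? [? ?]]] Ht. repeat split.
    + intros i Hi. unfold vadd, vscale. rewrite Hx, Hy by auto. ring.
    + unfold vadd, vscale. nra.
    + unfold vadd, vscale. nra.
    + unfold vadd, vscale. nra.
  - intros d [Hd [H0 [H1 H2]]].
    destruct (Req_dec (d 2%nat) 0) as [Hz|Hz].
    + apply (in_T3 d 1); auto; [lra|].
      replace (vadd xbar (vscale 1 d)) with (vec3 0 1 1).
      * apply C_gen, gamma_top; split; lra.
      * rewrite (inRn3_eq d Hd). unfold xbar. rewrite H0, H1, Hz. vcases.
    + apply (in_T3 d (-2 / d 2%nat)); auto.
      * apply Rmult_lt_reg_r with (- d 2%nat); [lra|]. unfold Rdiv.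
        rewrite Rmult_0_l. replace (-2 * / d 2%nat * - d 2%nat) with 2 by (field; auto). lra.
      * replace (vadd xbar (vscale (-2 / d 2%nat) d)) with (vec3 0 1 (-1)).
        -- apply C_gen, gamma_bot; split; lra.
        -- rewrite (inRn3_eq d Hd). unfold xbar. rewrite H0, H1. vcases. field; auto.
  - intros x y z [Hx [X0 [X1 X2]]] Hy Hz [t [Ht Hxe]].
    assert (Ey : x 1%nat = (1 - t) * y 1%nat + t * z 1%nat) by (rewrite Hxe; reflexivity).
    assert (E0 : x 0%nat = (1 - t) * y 0%nat + t * z 0%nat) by (rewrite Hxe; reflexivity).
    pose proof (T3_ineq1 y Hy). pose proof (T3_ineq1 z Hz).
    pose proof (T3_ineq2 y Hy). pose proof (T3_ineq2 z Hz).
    assert (y 1%nat = 0) by nra. assert (z 1%nat = 0) by nra.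
    assert (Py : y 0%nat >= 0).
    { apply (small_k_pos _ (y 2%nat)); [|lra]. intros k Hk.
      pose proof (T3_ineq3 y k Hk Hy). rewrite H3 in H5. lra. }
    assert (Pz : z 0%nat >= 0).
    { apply (small_k_pos _ (z 2%nat)); [|lra]. intros k Hk.
      pose proof (T3_ineq3 z k Hk Hz). rewrite H4 in H5. lra. }
    assert (y 0%nat = 0) by nra. assert (z 0%nat = 0) by nra.
    split; repeat split; auto; apply T3_inRn; auto.
Qed.

Lemma T3_bot k : 0 < k <= 1 -> forall sg, sg = 1 \/ sg = -1 ->
  T3 (vec3 (sg * 2 * k) (-2*k*k) (-2*(1+k*k))).
Proof.
  intros Hk sg Hsg. apply (in_T3 _ (/(1+k*k))).
  - apply inRn3_vec3.
  - apply Rinv_0_lt_compat; nra.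
  - replace (vadd xbar (vscale (/ (1 + k * k)) (vec3 (sg * 2 * k) (-2*k*k) (-2*(1+k*k)))))
      with (vec3 (sg * 2*k/(1+k*k)) ((1-k*k)/(1+k*k)) (-1)).
    + apply C_gen, gamma_bot. split.
      * destruct Hsg; subst; field; nra.
      * apply Rmult_le_pos; [nra|]. left; apply Rinv_0_lt_compat; nra.
    + unfold xbar. vcases; field; nra.
Qed.

Lemma T3_e1 : T3 (vec3 1 0 0).
Proof.
  split; [apply inRn3_vec3|]. intros eps He.
  set (k := Rmin 1 (eps/2)).
  assert (Hk : 0 < k <= 1) by (unfold k; split; [apply Rmin_pos; lra|apply Rmin_l]).
  assert (Hk2 : k <= eps/2) by apply Rmin_r.
  exists (vec3 1 (-k) 0). split.
  - split; [apply inRn3_vec3|]. exists (2*k/(1+k*k)). split.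
    + apply Rdiv_lt_0_compat; nra.
    + replace (vadd xbar (vscale (2 * k / (1 + k * k)) (vec3 1 (- k) 0)))
        with (vec3 (2*k/(1+k*k)) ((1-k*k)/(1+k*k)) 1).
      * apply C_gen, gamma_top. split; [field; nra|]. split.
        -- apply Rmult_le_pos; [nra|]. left; apply Rinv_0_lt_compat; nra.
        -- apply Rmult_le_pos; [nra|]. left; apply Rinv_0_lt_compat; nra.
      * unfold xbar. vcases; field; nra.
  - eapply Rle_lt_trans; [apply vdist_le_sabs|]. simpl.
    unfold vadd, vscale. simpl.
    replace (1 + -1*1) with 0 by ring. replace (0 + -1 * - k) with k by ring.
    replace (0 + -1 * 0) with 0 by ring. rewrite Rabs_R0, (Rabs_right k) by lra. lra.
Qed.

Lemma part2 : ~ facially_exposed 3 T3.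
Proof.
  intro H. specialize (H Fr Fr_face).
  assert (Hne : exists x, Fr x) by (exists (vec3 0 0 0); repeat split; simpl; try lra; apply inRn3_vec3).
  assert (Hneq : ~ set_eq Fr T3).
  { intro E. assert (T3 (vec3 1 (-1) 0)).
    { apply (in_T3 _ 1); [apply inRn3_vec3|lra|].
      replace (vadd xbar (vscale 1 (vec3 1 (-1) 0))) with (vec3 1 0 1).
      - apply C_gen, gamma_top; split; lra.
      - unfold xbar; vcases. }
    apply E in H0. destruct H0 as [_ [_ [? _]]]. simpl in H0. nra. }
  destruct (H Hne Hneq) as [a [b [Ha [_ [Hge Hiff]]]]].
  assert (Fr (vec3 0 0 0)) by (repeat split; simpl; try lra; apply inRn3_vec3).
  apply Hiff in H0. destruct H0 as [_ Hb]. simpl in Hb.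
  assert (Fr (vec3 0 0 (-1))) by (repeat split; simpl; try lra; apply inRn3_vec3).
  apply Hiff in H0. destruct H0 as [_ Ha2]. simpl in Ha2.
  assert (Hp : forall k, 0 < k <= 1 -> 2*k*(a 0%nat) - k*k*(2 * a 1%nat) >= 0).
  { intros k Hk. pose proof (Hge _ (T3_bot k Hk 1 (or_introl eq_refl))). simpl in H0. nra. }
  assert (Hm : forall k, 0 < k <= 1 -> 2*k*(- a 0%nat) - k*k*(2 * a 1%nat) >= 0).
  { intros k Hk. pose proof (Hge _ (T3_bot k Hk (-1) (or_intror eq_refl))). simpl in H0. nra. }
  assert (Ha1 : 2 * a 1%nat <= 0).
  { specialize (Hp 1 ltac:(lra)). specialize (Hm 1 ltac:(lra)). lra. }
  pose proof (small_k_pos _ _ Hp Ha1). pose proof (small_k_pos _ _ Hm Ha1).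
  assert (Fr (vec3 1 0 0)).
  { apply Hiff. split; [apply T3_e1|]. simpl. nra. }
  destruct H2 as [_ [? _]]. simpl in H2. lra.
Qed.

Lemma K_valid a :
  (forall c s, top c s -> ip 4 a (vec4 c s 1 1) >= 0) ->
  (forall c s, bot c s -> ip 4 a (vec4 c s (-1) 1) >= 0) ->
  forall w, K_ex w -> ip 4 a w >= 0.
Proof.
  intros Ht Hb w Hw. apply Kchar in Hw. destruct Hw as [lam [c [Hl [Hc ->]]]].
  rewrite ip_scale. apply Rle_ge, Rmult_le_pos; auto.
  assert (ip 3 a c >= - a 3%nat).
  { apply gen_valid3; auto.
    - intros c0 s Hcs. specialize (Ht c0 s Hcs). simpl in *. lra.
    - intros c0 s Hcs. specialize (Hb c0 s Hcs). simpl in *. lra. }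
  simpl in *. unfold L, vec4. simpl. lra.
Qed.

Definition p4 := vec4 0 1 1 1.
Definition L1 := tangent 4 p4 K_ex.
Definition G' : VSet := fun d => inRn 4 d /\ d 1%nat = d 3%nat /\ 0 <= d 0%nat /\ d 2%nat <= d 3%nat.
Definition q' := vec4 0 0 (-1) 0.

Lemma Kp4 : K_ex p4.
Proof.
  apply Kchar. exists 1, xbar. split; [lra|]. split.
  - apply C_gen, gamma_top; split; lra.
  - unfold p4, xbar. vcases.
Qed.

Lemma L1_ineq1 d : L1 d -> d 1%nat <= d 3%nat.
Proof.
  intro H. pose proof (tangent_valid 4 (vec4 0 (-1) 0 1) 0 p4 K_ex) as T.
  assert (ip 4 (vec4 0 (-1) 0 1) d >= 0).
  { apply T; auto.
    - apply K_valid; intros c s [? ?]; simpl; nra.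
    - unfold p4; simpl; ring. }
  simpl in H0. lra.
Qed.
Lemma L1_ineq2 d : L1 d -> d 2%nat <= d 3%nat.
Proof.
  intro H. pose proof (tangent_valid 4 (vec4 0 0 (-1) 1) 0 p4 K_ex) as T.
  assert (ip 4 (vec4 0 0 (-1) 1) d >= 0).
  { apply T; auto.
    - apply K_valid; intros c s [? ?]; simpl; nra.
    - unfold p4; simpl; ring. }
  simpl in H0. lra.
Qed.
Lemma L1_ineq3 d k : 0 < k <= 1 -> L1 d ->
  2*k*d 0%nat - (1 - k*k) * d 1%nat - k*k * d 2%nat + d 3%nat >= 0.
Proof.
  intros Hk H.
  pose proof (tangent_valid 4 (vec4 (2*k) (-(1-k*k)) (-(k*k)) 1) 0 p4 K_ex) as T.
  assert (ip 4 (vec4 (2*k) (-(1-k*k)) (-(k*k)) 1) d >= 0).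
  { apply T; auto.
    - apply K_valid; intros c s Hcs; simpl.
      + destruct Hcs as [? [? ?]]. assert (s <= 1) by nra. assert (0 <= 1 - k*k) by nra.
        assert (0 <= k*c) by nra. assert (0 <= (1-k*k)*(1-s)) by nra. nra.
      + pose proof (bot_ineq k c s Hcs). lra.
    - unfold p4; simpl; ring. }
  simpl in H0. lra.
Qed.

Lemma closure_coord4 (D : VSet) x p q r u :
  (forall y, D y -> p * y 0%nat + q * y 1%nat + r * y 2%nat + u * y 3%nat >= 0) -> closure 4 D x ->
  p * x 0%nat + q * x 1%nat + r * x 2%nat + u * x 3%nat >= 0.
Proof.
  intros H Hx. pose proof (closure_ge 4 (vec4 p q r u) D x) as T. simpl in T.
  assert (0 + p * x 0%nat + q * x 1%nat + r * x 2%nat + u * x 3%nat >= 0); [|lra].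
  apply T; auto. intros y Hy. specialize (H y Hy). lra.
Qed.

Lemma C_edge_pt x m k delta : 0 <= x -> 0 <= m -> 0 < k <= 1 -> 0 < delta ->
  delta * (x * (1 + k*k) / (2*k) + m/2) <= 1 ->
  C_ex (vec3 (delta * x) (1 - delta * k * x) (1 - delta * m)).
Proof.
  intros Hx Hm Hk Hd Hs.
  set (al := delta * x * (1 + k*k) / (2*k)).
  set (be := delta * m / 2).
  assert (Hal : 0 <= al).
  { unfold al. apply Rmult_le_pos; [|left; apply Rinv_0_lt_compat; lra].
    apply Rmult_le_pos; [apply Rmult_le_pos; lra|nra]. }
  assert (Hbe : 0 <= be) by (unfold be; apply Rmult_le_pos; [apply Rmult_le_pos; lra|lra]).
  assert (Hab : al + be <= 1).
  { unfold al, be. replace (delta * x * (1 + k * k) / (2 * k) + delta * m / 2)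
      with (delta * (x * (1 + k * k) / (2 * k) + m / 2)) by (field; lra). lra. }
  exists ((1 - al - be, vec3 0 1 1) :: (al, vec3 (2*k/(1+k*k)) ((1-k*k)/(1+k*k)) 1)
           :: (be, vec3 0 1 (-1)) :: nil).
  split; [|split].
  - constructor; [simpl; split; [lra|apply gamma_top; split; lra]|].
    constructor; [simpl; split; [lra|apply gamma_top]|].
    { split; [field; nra|]. split.
      - apply Rmult_le_pos; [nra|]. left; apply Rinv_0_lt_compat; nra.
      - apply Rmult_le_pos; [nra|]. left; apply Rinv_0_lt_compat; nra. }
    constructor; [simpl; split; [lra|apply gamma_bot; split; lra]|]. constructor.
  - simpl; ring.
  - unfold al, be; vcases; field; nra.
Qed.

Lemma G'_sub d : G' d -> L1 d.
Proof.
  intros [Hd [H13 [H0 H23]]].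
  split; auto. intros eps He.
  set (x := d 0%nat). set (s := d 1%nat). set (m := s - d 2%nat).
  assert (Hm : 0 <= m) by (unfold m, s; lra).
  set (k := Rmin 1 (eps / (2 * (x + 1)))).
  assert (Hk : 0 < k <= 1).
  { unfold k; split; [apply Rmin_pos; [lra|apply Rdiv_lt_0_compat; unfold x; lra]|apply Rmin_l]. }
  assert (Hk2 : k <= eps / (2 * (x + 1))) by apply Rmin_r.
  set (w := vec4 x (s - k * x) (d 2%nat) s).
  exists w. split.
  - split; [apply inRn4_vec4|].
    set (Dn := x * (1 + k*k) / (2*k) + m/2 + Rabs s + 1).
    set (delta := / Dn).
    assert (HX : 0 <= x * (1 + k*k) / (2*k)).
    { apply Rmult_le_pos; [|left; apply Rinv_0_lt_compat; lra].
      apply Rmult_le_pos; [unfold x; lra|nra]. }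
    pose proof (Rabs_pos s).
    assert (HDn : 0 < Dn) by (unfold Dn; lra).
    assert (Hdel : 0 < delta) by (apply Rinv_0_lt_compat; auto).
    assert (Hdd : delta * Dn = 1) by (unfold delta; apply Rinv_l; lra).
    assert (Hs1 : delta * s < 1).
    { pose proof (Rle_abs s). assert (delta * s <= delta * Rabs s) by nra.
      assert (delta * Rabs s < delta * Dn) by (apply Rmult_lt_compat_l; unfold Dn; lra). lra. }
    exists (delta / (1 - delta * s)). split; [apply Rdiv_lt_0_compat; lra|].
    apply Kchar. exists (/ (1 - delta * s)), (vec3 (delta * x) (1 - delta * k * x) (1 - delta * m)).
    split; [left; apply Rinv_0_lt_compat; lra|]. split.
    + apply C_edge_pt; [unfold x; lra|lra|lra|lra|].
      assert (delta * (m/2 + Rabs s + 1) >= 0) by (apply Rle_ge, Rmult_le_pos; lra).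
      unfold Dn in Hdd. nra.
    + unfold p4, w, m. vcases; field; lra.
  - eapply Rle_lt_trans; [apply vdist_le_sabs|].
    rewrite (inRn4_eq d Hd). unfold w. simpl. unfold vadd, vscale. simpl.
    replace (d 0%nat + -1 * x) with 0 by (unfold x; ring).
    replace (d 1%nat + -1 * (s - k * x)) with (k * x) by (unfold s; ring).
    rewrite Rabs_R0, (Rabs_right (k*x)) by (unfold x in *; nra).
    assert (k * (2 * (x+1)) <= eps).
    { apply Rmult_le_compat_r with (r := 2*(x+1)) in Hk2; [|unfold x in *; lra].
      unfold Rdiv in Hk2. rewrite Rmult_assoc, Rinv_l in Hk2; unfold x in *; lra. }
    assert (0 <= k*x) by (apply Rmult_le_pos; unfold x in *; lra). 
    replace (d 2%nat + -1 * d 2%nat) with 0 by ring.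
    replace (d 3%nat + -1 * s) with 0 by (unfold s; lra). rewrite Rabs_R0. lra.
Qed.

Lemma G'_face : face 4 L1 G'.
Proof.
  split; [|split; [|split]].
  - intros x Hx. split; [destruct Hx; auto|].
    assert (forall p q r u, (forall y, G' y -> p * y 0%nat + q * y 1%nat + r * y 2%nat + u * y 3%nat >= 0) ->
       p * x 0%nat + q * x 1%nat + r * x 2%nat + u * x 3%nat >= 0) as G by (intros; apply closure_coord4 with G'; auto).
    pose proof (G 1 0 0 0 ltac:(intros y [_ [? [? ?]]]; nra)).
    pose proof (G 0 1 0 (-1) ltac:(intros y [_ [? [? ?]]]; nra)).
    pose proof (G 0 (-1) 0 1 ltac:(intros y [_ [? [? ?]]]; nra)).
    pose proof (G 0 0 (-1) 1 ltac:(intros y [_ [? [? ?]]]; nra)).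
    repeat split; lra.
  - intros x y t [Hx [? [? ?]]] [Hy [? [? ?]]] Ht. repeat split.
    + intros i Hi. unfold vadd, vscale. rewrite Hx, Hy by auto. ring.
    + unfold vadd, vscale. rewrite H, H2. ring.
    + unfold vadd, vscale. nra.
    + unfold vadd, vscale. nra.
  - apply G'_sub.
  - intros x y z [Hx [X0 [X1 X2]]] Hy Hz [t [Ht Hxe]].
    assert (E1 : x 1%nat - x 3%nat = (1 - t) * (y 1%nat - y 3%nat) + t * (z 1%nat - z 3%nat))
      by (rewrite Hxe; unfold vadd, vscale; ring).
    assert (E0 : x 0%nat = (1 - t) * y 0%nat + t * z 0%nat) by (rewrite Hxe; reflexivity).
    pose proof (L1_ineq1 y Hy). pose proof (L1_ineq1 z Hz).
    pose proof (L1_ineq2 y Hy). pose proof (L1_ineq2 z Hz).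
    assert (y 1%nat = y 3%nat) by nra. assert (z 1%nat = z 3%nat) by nra.
    assert (Py : y 0%nat >= 0).
    { apply (small_k_pos _ (y 2%nat - y 3%nat)); [|lra]. intros k Hk.
      pose proof (L1_ineq3 y k Hk Hy). rewrite H3 in H5. nra. }
    assert (Pz : z 0%nat >= 0).
    { apply (small_k_pos _ (z 2%nat - z 3%nat)); [|lra]. intros k Hk.
      pose proof (L1_ineq3 z k Hk Hz). rewrite H4 in H5. nra. }
    destruct Hy as [Iy _]. destruct Hz as [Iz _].
    split; repeat split; auto; lra.
Qed.

Lemma part3 : ~ strongly_tangentially_exposed 4 K_ex.
Proof.
  intros [_ H]. specialize (H L1 (lex_base 4 K_ex p4 Kp4)).
  assert (Gq : G' q') by (unfold q'; repeat split; simpl; try lra; apply inRn4_vec4).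
  assert (Gne : ~ set_eq G' L1).
  { intro E. assert (L1 (vec4 1 (-1) 0 0)).
    { apply closure_self; [apply inRn4_vec4|]. split; [apply inRn4_vec4|].
      exists 1. split; [lra|]. apply Kchar. exists 1, (vec3 1 0 1). split; [lra|]. split.
      - apply C_gen, gamma_top; split; lra.
      - unfold p4; vcases. }
    apply E in H0. destruct H0 as [_ [? _]]. simpl in H0. lra. }
  specialize (H G' q' G'_face Gne Gq (vec4 (-1) 0 0 0)).
  destruct H as [H _].
  assert (Hn : ~ tangent 4 q' G' (vec4 (-1) 0 0 0)).
  { intro T. pose proof (tangent_valid 4 (vec4 1 0 0 0) 0 q' G') as V.
    assert (ip 4 (vec4 1 0 0 0) (vec4 (-1) 0 0 0) >= 0).
    { apply V; auto.
      - intros y [_ [_ [? _]]]. simpl. lra.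
      - unfold q'; simpl; ring. }
    simpl in H0. lra. }
  apply Hn, H. split.
  - split; [apply inRn4_vec4|]. intros eps He.
    set (k := Rmin 1 (eps/2)).
    assert (Hk : 0 < k <= 1) by (unfold k; split; [apply Rmin_pos; lra|apply Rmin_l]).
    assert (Hk2 : k <= eps/2) by apply Rmin_r.
    exists (vec4 (-1) (-k) 0 0). split.
    + split; [apply inRn4_vec4|]. exists (k / (1 + k*k)). split; [apply Rdiv_lt_0_compat; nra|].
      apply closure_self; [intros [|[|[|[|i]]]] Hi; simpl; try lia; unfold q', vadd, vscale; simpl; ring|].
      split; [intros [|[|[|[|i]]]] Hi; simpl; try lia; unfold q', vadd, vscale; simpl; ring|].
      exists 2. split; [lra|]. apply Kchar.
      exists 1, (vec3 (-2*k/(1+k*k)) ((1-k*k)/(1+k*k)) (-1)). split; [lra|]. split.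
      * apply C_gen, gamma_bot. split; [field; nra|].
        apply Rmult_le_pos; [nra|]. left; apply Rinv_0_lt_compat; nra.
      * unfold p4, q'. vcases; field; nra.
    + eapply Rle_lt_trans; [apply vdist_le_sabs|]. simpl. unfold vadd, vscale. simpl.
      replace (-1 + -1 * -1) with 0 by ring. replace (0 + -1 * - k) with k by ring.
      replace (0 + -1 * 0) with 0 by ring. rewrite Rabs_R0, (Rabs_right k) by lra. lra.
  - exists ((-1, vec4 1 0 0 0) :: nil). split.
    + constructor; [|constructor]. simpl. repeat split; simpl; try lra. apply inRn4_vec4.
    + vcases.
Qed.

Section Face.
Variable Fc : VSet.
Hypothesis HF : face 4 K_ex Fc.

Lemma Fsub w : Fc w -> K_ex w.
Proof. destruct HF as [_ [_ [H _]]]; auto. Qed.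

Lemma Fext w y z t : Fc w -> K_ex y -> K_ex z -> 0 < t < 1 ->
  w = vadd (vscale (1 - t) y) (vscale t z) -> Fc y /\ Fc z.
Proof.
  intros Hw Hy Hz Ht He. destruct HF as [_ [_ [_ H]]]. apply (H w y z); auto.
  exists t; auto.
Qed.

Lemma Fconv y z t : Fc y -> Fc z -> 0 <= t <= 1 -> Fc (vadd (vscale (1 - t) y) (vscale t z)).
Proof. intros. destruct HF as [_ [Hc _]]. apply Hc; auto. Qed.

Lemma Fscale mu w : 0 <= mu -> Fc w -> Fc (vscale mu w).
Proof.
  intros Hm Hw. pose proof (Fsub w Hw) as Kw.
  destruct (Rle_lt_dec mu 1) as [H1|H1].
  - destruct (Req_dec mu 1) as [->|Hne].
    + replace (vscale 1 w) with w; auto. apply vext; intro; unfold vscale; ring.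
    +
      destruct (Fext w (vscale mu w) (vscale (2 - mu) w) (1/2)) as [A _]; auto.
      * apply K_scale; auto.
      * apply K_scale; auto; lra.
      * lra.
      * apply vext; intro; unfold vadd, vscale; field.
  - destruct (Fext w (vscale mu w) vzero (1 - /mu)) as [A _]; auto.
    + apply K_scale; auto.
    + replace vzero with (vscale 0 w) by (apply vext; intro; unfold vscale, vzero; ring).
      apply K_scale; auto; lra.
    + split.
      * assert (/mu < 1) by (rewrite <- Rinv_1; apply Rinv_lt_contravar; lra). lra.
      * assert (0 < /mu) by (apply Rinv_0_lt_compat; lra). lra.
    + apply vext; intro; unfold vadd, vscale, vzero; field; lra.
Qed.

Lemma Fadd y z : Fc y -> Fc z -> Fc (vadd y z).
Proof.
  intros Hy Hz.
  replace (vadd y z) with (vadd (vscale (1 - 1/2) (vscale 2 y)) (vscale (1/2) (vscale 2 z))).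
  - apply Fconv; try apply Fscale; auto; lra.
  - apply vext; intro; unfold vadd, vscale; field.
Qed.

Lemma K_zero : K_ex vzero.
Proof.
  replace vzero with (vscale 0 p4) by (apply vext; intro; unfold vscale, vzero; ring).
  apply K_scale; [lra|apply Kp4].
Qed.

Lemma K_lincomb l : Forall (fun p => 0 <= fst p /\ K_ex (snd p)) l -> K_ex (lincomb l).
Proof.
  induction 1 as [|[a e] l [H0 He] Hf IH]; simpl.
  - apply K_zero.
  - apply K_add; auto. apply K_scale; auto.
Qed.

Lemma F_decomp l : Forall (fun p => 0 <= fst p /\ K_ex (snd p)) l -> Fc (lincomb l) ->
  Forall (fun p => fst p = 0 \/ Fc (snd p)) l.
Proof.
  induction 1 as [|[a e] l [H0 He] Hf IH]; simpl; intros Hw; constructor.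
  - pose proof (K_lincomb l Hf) as Kr.
    destruct (Fext _ (vscale 2 (vscale a e)) (vscale 2 (lincomb l)) (1/2) Hw) as [A B].
    + apply K_scale; [lra|]. apply K_scale; auto.
    + apply K_scale; [lra|exact Kr].
    + lra.
    + apply vext; intro; unfold vadd, vscale; field.
    + simpl. destruct (Req_dec a 0) as [->|Ha]; [left; auto|right].
      replace e with (vscale (/(2*a)) (vscale 2 (vscale a e))).
      * assert (Hap : 0 < a) by (destruct H0 as [h|h]; [exact h|exfalso; apply Ha; auto]).
        apply Fscale; auto. left; apply Rinv_0_lt_compat; lra.
      * apply vext; intro; unfold vscale; field; auto.
  - apply IH.
    destruct (Fext _ (vscale 2 (vscale a e)) (vscale 2 (lincomb l)) (1/2) Hw) as [A B].
    + apply K_scale; [lra|]. apply K_scale; auto.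
    + apply K_scale; [lra|]. apply K_lincomb; auto.
    + lra.
    + apply vext; intro; unfold vadd, vscale; field.
    + replace (lincomb l) with (vscale (1/2) (vscale 2 (lincomb l))).
      * apply Fscale; auto; lra.
      * apply vext; intro; unfold vscale; field.
Qed.

Definition lmapL (lam : R) (l : list (R * Vec)) := map (fun p => (lam * fst p, L (snd p))) l.
Lemma lincomb_lmapL lam l : lincomb (lmapL lam l) =
  vscale lam (vec4 (lincomb l 0%nat) (lincomb l 1%nat) (lincomb l 2%nat) (wsum l)).
Proof.
  induction l as [|[a e] l IH]; simpl.
  - vcases.
  - rewrite IH. vcases.
Qed.

Lemma F_gens w : Fc w -> exists lam l, 0 <= lam /\ Forall (fun p => 0 <= fst p /\ gamma12 (snd p)) l /\
  w = lincomb (lmapL lam l) /\ Forall (fun p => lam * fst p = 0 \/ Fc (L (snd p))) l.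
Proof.
  intros Hw. pose proof (Fsub w Hw) as Kw. apply Kchar in Kw.
  destruct Kw as [lam [c [Hl [[l [Hf [Hs ->]]] ->]]]].
  assert (E : vscale lam (L (lincomb l)) = lincomb (lmapL lam l)).
  { rewrite lincomb_lmapL, Hs. reflexivity. }
  exists lam, l. split; auto. split; auto. split; auto.
  rewrite E in Hw. apply F_decomp in Hw.
  - clear -Hw. induction l as [|[a e] l IH]; simpl in *; constructor; inversion Hw; subst; auto.
  - clear -Hf Hl. induction Hf as [|[a e] l [H0 He] Hf IH]; simpl; constructor; auto.
    simpl. split; [apply Rmult_le_pos; auto|]. apply Kchar. exists 1, e. split; [lra|].
    split; [apply C_gen; auto|]. apply vext; intro; unfold vscale; ring.
Qed.

Lemma perp_gens f : (forall g, gamma12 g -> Fc (L g) -> ip 4 f (L g) = 0) ->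
  forall w, Fc w -> ip 4 f w = 0.
Proof.
  intros H w Hw. destruct (F_gens w Hw) as [lam [l [Hl [Hf [-> Hz]]]]].
  rewrite ip_lincomb. clear Hw. induction l as [|[a e] l IH]; simpl; auto.
  inversion Hf as [|? ? Hf1 Hf2]; inversion Hz as [|? ? Hz1 Hz2]; subst. simpl in *. rewrite IH; auto.
  destruct Hz1 as [Z|Z]; [rewrite Z; ring|]. rewrite H; [ring| |auto]. tauto.
Qed.

End Face.

Lemma disk_step tx ty c s lam : tx*tx + ty*ty < 1 -> c*c + s*s = 1 -> 0 < lam <= 1 ->
  8 * lam <= 1 - (tx*tx + ty*ty) ->
  ((1+lam)*tx - lam*c) * ((1+lam)*tx - lam*c) + ((1+lam)*ty - lam*s) * ((1+lam)*ty - lam*s) <= 1.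
Proof.
  intros H1 H2 H3 H4.
  set (R := tx*tx+ty*ty) in *.
  assert (Hd : (tx*c + ty*s) * (tx*c + ty*s) <= R).
  { pose proof (Rle_0_sqr (tx*s - ty*c)). unfold Rsqr in H. unfold R. nra. }
  assert (Hd2 : -1 <= tx*c + ty*s).
  { destruct (Rle_or_lt (-1) (tx*c+ty*s)) as [h|h]; auto. nra. }
  assert (E : ((1+lam)*tx - lam*c) * ((1+lam)*tx - lam*c) + ((1+lam)*ty - lam*s) * ((1+lam)*ty - lam*s)
    = (1+lam)*(1+lam)*R - 2*lam*(1+lam)*(tx*c+ty*s) + lam*lam) by (unfold R; nra).
  rewrite E.
  assert (0 <= R) by (unfold R; nra).
  assert ((1+lam)*(1+lam)*R <= R + 3*lam) by nra.
  assert (- 2*lam*(1+lam)*(tx*c+ty*s) <= 2*lam*(1+lam)) by nra.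
  nra.
Qed.

Lemma eps_quad A B C : (0 < A \/ (A = 0 /\ 0 < B)) ->
  exists e0, 0 < e0 /\ forall e, 0 < e <= e0 -> 0 < A + B*e + C*e*e.
Proof.
  intros [HA|[HA HB]].
  - exists (Rmin 1 (A / (2 * (Rabs B + Rabs C + 1)))). split.
    + apply Rmin_pos; [lra|]. apply Rdiv_lt_0_compat; [lra|]. pose proof (Rabs_pos B); pose proof (Rabs_pos C); lra.
    + intros e [He1 He2].
      assert (e <= 1) by (eapply Rle_trans; [exact He2|apply Rmin_l]).
      assert (e <= A / (2 * (Rabs B + Rabs C + 1))) by (eapply Rle_trans; [exact He2|apply Rmin_r]).
      pose proof (Rabs_pos B); pose proof (Rabs_pos C).
      assert (e * (2 * (Rabs B + Rabs C + 1)) <= A).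
      { apply Rmult_le_compat_r with (r := 2 * (Rabs B + Rabs C + 1)) in H0; [|lra].
        unfold Rdiv in H0. rewrite Rmult_assoc, Rinv_l in H0; lra. }
      pose proof (Rle_abs B). pose proof (Rle_abs (-B)) as HB. rewrite Rabs_Ropp in HB.
      pose proof (Rle_abs C). pose proof (Rle_abs (-C)) as HC. rewrite Rabs_Ropp in HC.
      assert (- Rabs B * e <= B * e) by nra.
      assert (- Rabs C * e * e <= C * e * e) by nra.
      assert (0 <= Rabs C * e) by (apply Rmult_le_pos; lra).
      assert (Rabs C * e * e <= Rabs C * e) by nra.
      assert (Rabs B * e + Rabs C * e + e <= A / 2) by nra.
      nra.
  - exists (Rmin 1 (B / (2 * (Rabs C + 1)))). split.
    + apply Rmin_pos; [lra|]. apply Rdiv_lt_0_compat; [lra|]. pose proof (Rabs_pos C); lra.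
    + intros e [He1 He2]. subst A.
      assert (e <= B / (2 * (Rabs C + 1))) by (eapply Rle_trans; [exact He2|apply Rmin_r]).
      pose proof (Rabs_pos C).
      assert (e * (2 * (Rabs C + 1)) <= B).
      { apply Rmult_le_compat_r with (r := 2 * (Rabs C + 1)) in H; [|lra].
        unfold Rdiv in H. rewrite Rmult_assoc, Rinv_l in H; lra. }
      pose proof (Rle_abs (-C)) as HC. rewrite Rabs_Ropp in HC.
      assert (- Rabs C * e * e <= C * e * e) by nra.
      assert (0 < e * (B - Rabs C * e)) by nra.
      nra.
Qed.

Lemma top_facts c s : top c s -> c <= 1 /\ s <= 1 /\ 1 - c <= s /\ 1 - s <= c /\ 0 <= c + s - 1.
Proof.
  intros [H [Hc Hs]].
  assert (c <= 1) by nra. assert (s <= 1) by nra.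
  repeat split; nra.
Qed.
Lemma bot_facts c s : bot c s -> -1 <= c <= 1 /\ s <= 1 /\ (0 <= c -> 1 - c <= s) /\ (c <= 0 -> 1 + c <= s).
Proof.
  intros [H Hs].
  assert (c <= 1) by nra. assert (s <= 1) by nra. assert (-1 <= c) by nra.
  repeat split; try lra; intros; nra.
Qed.

Lemma KT x y : x*x + y*y <= 1 -> x + y >= 1 -> K_ex (vec4 x y 1 1).
Proof.
  intros. apply Kchar. exists 1, (vec3 x y 1). split; [lra|]. split; [apply RT; auto|]. vcases.
Qed.
Lemma KB x y : x*x + y*y <= 1 -> 0 <= y -> K_ex (vec4 x y (-1) 1).
Proof.
  intros. apply Kchar. exists 1, (vec3 x y (-1)). split; [lra|]. split; [apply RB; auto|]. vcases.
Qed.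
Lemma KgT c s : top c s -> K_ex (vec4 c s 1 1).
Proof. intros [H [? ?]]. apply KT; nra. Qed.
Lemma KgB c s : bot c s -> K_ex (vec4 c s (-1) 1).
Proof. intros [H ?]. apply KB; nra. Qed.

Section Forcing.
Variable Fc : VSet.
Hypothesis HF : face 4 K_ex Fc.
Definition ST c s := Fc (vec4 c s 1 1).
Definition SB c s := Fc (vec4 c s (-1) 1).

Lemma min3_facts a b : 0 < a -> 0 < b -> 0 < Rmin 1 (Rmin a b) /\ Rmin 1 (Rmin a b) <= 1 /\
  Rmin 1 (Rmin a b) <= a /\ Rmin 1 (Rmin a b) <= b.
Proof.
  intros. pose proof (Rmin_l 1 (Rmin a b)). pose proof (Rmin_r 1 (Rmin a b)).
  pose proof (Rmin_l a b). pose proof (Rmin_r a b).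
  repeat split; try lra. apply Rmin_pos; [lra|apply Rmin_pos; lra].
Qed.

Lemma FT tx ty : tx*tx + ty*ty < 1 -> tx + ty > 1 -> Fc (vec4 tx ty 1 1) ->
  forall c s, top c s -> ST c s.
Proof.
  intros H1 H2 Hf c s Hcs.
  destruct (min3_facts (tx+ty-1) ((1 - (tx*tx+ty*ty))/8)) as [L0 [L1' [L2 L3]]]; try lra.
  set (lam := Rmin 1 (Rmin (tx + ty - 1) ((1 - (tx*tx+ty*ty))/8))) in *.
  pose proof (top_facts c s Hcs) as [Tc [Ts _]]. destruct Hcs as [Hn [Hc Hs]].
  destruct (Fext Fc HF (vec4 tx ty 1 1) (vec4 ((1+lam)*tx - lam*c) ((1+lam)*ty - lam*s) 1 1)
     (vec4 c s 1 1) (lam / (1 + lam)) Hf) as [_ B]; auto.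
  - apply KT.
    + apply disk_step; auto; lra.
    + nra.
  - apply KgT; split; auto.
  - split; [apply Rdiv_lt_0_compat; lra|].
    apply Rmult_lt_reg_r with (1 + lam); [lra|]. unfold Rdiv. rewrite Rmult_assoc, Rinv_l; lra.
  - vcases; field; lra.
Qed.

Lemma FB tx ty : tx*tx + ty*ty < 1 -> 0 < ty -> Fc (vec4 tx ty (-1) 1) ->
  forall c s, bot c s -> SB c s.
Proof.
  intros H1 H2 Hf c s Hcs.
  destruct (min3_facts ty ((1 - (tx*tx+ty*ty))/8)) as [L0 [L1' [L2 L3]]]; try lra.
  set (lam := Rmin 1 (Rmin ty ((1 - (tx*tx+ty*ty))/8))) in *.
  pose proof (bot_facts c s Hcs) as [Tc [Ts _]]. destruct Hcs as [Hn Hs].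
  destruct (Fext Fc HF (vec4 tx ty (-1) 1) (vec4 ((1+lam)*tx - lam*c) ((1+lam)*ty - lam*s) (-1) 1)
     (vec4 c s (-1) 1) (lam / (1 + lam)) Hf) as [_ B]; auto.
  - apply KB.
    + apply disk_step; auto; lra.
    + nra.
  - apply KgB; split; auto.
  - split; [apply Rdiv_lt_0_compat; lra|].
    apply Rmult_lt_reg_r with (1 + lam); [lra|]. unfold Rdiv. rewrite Rmult_assoc, Rinv_l; lra.
  - vcases; field; lra.
Qed.

Lemma mid_eq a b c d z : vec4 ((a + c)/2) ((b + d)/2) z 1 =
  vadd (vscale (1 - 1/2) (vec4 a b z 1)) (vscale (1/2) (vec4 c d z 1)).
Proof. vcases; field. Qed.

Lemma TT c1 s1 c2 s2 : top c1 s1 -> top c2 s2 -> ST c1 s1 -> ST c2 s2 ->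
  ~ (c1 = c2 /\ s1 = s2) -> ~ (c1 = 1 /\ s1 = 0 /\ c2 = 0 /\ s2 = 1) ->
  ~ (c1 = 0 /\ s1 = 1 /\ c2 = 1 /\ s2 = 0) ->
  forall c s, top c s -> ST c s.
Proof.
  intros T1 T2 S1 S2 Hne N1 N2.
  assert (Fm : Fc (vec4 ((c1 + c2)/2) ((s1 + s2)/2) 1 1)).
  { rewrite mid_eq. apply (Fconv Fc HF); auto; lra. }
  apply (FT ((c1+c2)/2) ((s1+s2)/2)); auto.
  - destruct T1 as [A1 _]. destruct T2 as [A2 _].
    assert (0 < (c1-c2)*(c1-c2) + (s1-s2)*(s1-s2)).
    { destruct (Req_dec c1 c2) as [e|e].
      - assert (s1 <> s2) by tauto. assert (0 < (s1-s2)*(s1-s2)).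
        { apply Rsqr_pos_lt. lra. } pose proof (Rle_0_sqr (c1-c2)). unfold Rsqr in *. lra.
      - assert (0 < (c1-c2)*(c1-c2)) by (apply Rsqr_pos_lt; lra).
        pose proof (Rle_0_sqr (s1-s2)). unfold Rsqr in *. lra. }
    nra.
  - destruct T1 as [A1 [B1 C1]]. destruct T2 as [A2 [B2 C2]].
    assert (c1 + s1 >= 1) by nra. assert (c2 + s2 >= 1) by nra.
    destruct (Req_dec (c1 * s1) 0) as [Z1|Z1]; [destruct (Req_dec (c2 * s2) 0) as [Z2|Z2]|].
    + exfalso.
      destruct (Rmult_integral _ _ Z1) as [E1|E1]; destruct (Rmult_integral _ _ Z2) as [E2|E2]; subst.
      * apply Hne. split; nra.
      * assert (c2 = 1) by nra. assert (s1 = 1) by nra. apply N2; repeat split; auto.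
      * assert (c1 = 1) by nra. assert (s2 = 1) by nra. apply N1; repeat split; auto.
      * apply Hne. split; nra.
    + assert (0 < c2*s2) by (destruct B2 as [h|h]; [|subst; lra]; destruct C2 as [h'|h']; [nra|subst; lra]).
      assert (c2 + s2 > 1) by nra. lra.
    + assert (0 < c1*s1) by (destruct B1 as [h|h]; [|subst; lra]; destruct C1 as [h'|h']; [nra|subst; lra]).
      assert (c1 + s1 > 1) by nra. lra.
Qed.

Lemma BB c1 s1 c2 s2 : bot c1 s1 -> bot c2 s2 -> SB c1 s1 -> SB c2 s2 ->
  ~ (c1 = c2 /\ s1 = s2) -> ~ (s1 = 0 /\ s2 = 0) ->
  forall c s, bot c s -> SB c s.
Proof.
  intros T1 T2 S1 S2 Hne N1.
  assert (Fm : Fc (vec4 ((c1 + c2)/2) ((s1 + s2)/2) (-1) 1)).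
  { rewrite mid_eq. apply (Fconv Fc HF); auto; lra. }
  apply (FB ((c1+c2)/2) ((s1+s2)/2)); auto.
  - destruct T1 as [A1 _]. destruct T2 as [A2 _].
    assert (0 < (c1-c2)*(c1-c2) + (s1-s2)*(s1-s2)).
    { destruct (Req_dec c1 c2) as [e|e].
      - assert (s1 <> s2) by tauto. assert (0 < (s1-s2)*(s1-s2)).
        { apply Rsqr_pos_lt. lra. } pose proof (Rle_0_sqr (c1-c2)). unfold Rsqr in *. lra.
      - assert (0 < (c1-c2)*(c1-c2)) by (apply Rsqr_pos_lt; lra).
        pose proof (Rle_0_sqr (s1-s2)). unfold Rsqr in *. lra. }
    nra.
  - destruct T1 as [A1 B1]. destruct T2 as [A2 B2].
    destruct B1 as [h|h]; [lra|]. destruct B2 as [h'|h']; [lra|]. exfalso; apply N1; auto.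
Qed.
End Forcing.

Section TBsec.
Variable Fc : VSet.
Hypothesis HF : face 4 K_ex Fc.

Lemma TB_core c1 s1 c2 s2 d1 d2 : top c1 s1 -> bot c2 s2 -> ST Fc c1 s1 -> SB Fc c2 s2 ->
  c1*d1 + s1*d2 < 0 -> 0 < c2*d1 + s2*d2 ->
  (c1 + s1 > 1 \/ (c1 + s1 = 1 /\ d1 + d2 > 0)) -> (s2 > 0 \/ (s2 = 0 /\ d2 < 0)) ->
  (forall c s, top c s -> ST Fc c s) /\ (forall c s, bot c s -> SB Fc c s).
Proof.
  intros T1 T2 S1 S2 Q1 Q2 Q3 Q4.
  destruct (eps_quad 0 (-2*(c1*d1+s1*d2)) (-(d1*d1+d2*d2))) as [e1 [E1 P1]]; [right; split; lra|].
  destruct (eps_quad (c1+s1-1) (d1+d2) 0) as [e2 [E2 P2]]; [destruct Q3; [left|right]; lra|].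
  destruct (eps_quad 0 (2*(c2*d1+s2*d2)) (-(d1*d1+d2*d2))) as [e3 [E3 P3]]; [right; split; lra|].
  destruct (eps_quad s2 (-d2) 0) as [e4 [E4 P4]]; [destruct Q4; [left|right]; lra|].
  set (e := Rmin e1 (Rmin e2 (Rmin e3 e4))).
  assert (He : 0 < e) by (unfold e; repeat apply Rmin_pos; auto).
  assert (He1 : e <= e1) by apply Rmin_l.
  assert (He2 : e <= e2) by (eapply Rle_trans; [apply Rmin_r|apply Rmin_l]).
  assert (He3 : e <= e3) by (eapply Rle_trans; [apply Rmin_r|]; eapply Rle_trans; [apply Rmin_r|apply Rmin_l]).
  assert (He4 : e <= e4) by (eapply Rle_trans; [apply Rmin_r|]; eapply Rle_trans; [apply Rmin_r|apply Rmin_r]).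
  specialize (P1 e (conj He He1)). specialize (P2 e (conj He He2)).
  specialize (P3 e (conj He He3)). specialize (P4 e (conj He He4)).
  destruct T1 as [A1 [B1 C1]]. destruct T2 as [A2 B2].
  set (tx := c1 + e*d1). set (ty := s1 + e*d2). set (bx := c2 - e*d1). set (by' := s2 - e*d2).
  assert (Ht1 : tx*tx + ty*ty < 1) by (unfold tx, ty; nra).
  assert (Ht2 : tx + ty > 1) by (unfold tx, ty; nra).
  assert (Hb1 : bx*bx + by'*by' < 1) by (unfold bx, by'; nra).
  assert (Hb2 : 0 < by') by (unfold by'; nra).
  assert (Fm : Fc (vadd (vscale (1 - 1/2) (vec4 c1 s1 1 1)) (vscale (1/2) (vec4 c2 s2 (-1) 1)))).
  { apply (Fconv Fc HF); auto; lra. }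
  destruct (Fext Fc HF _ (vec4 tx ty 1 1) (vec4 bx by' (-1) 1) (1/2) Fm) as [Ft Fb].
  - apply KT; lra.
  - apply KB; lra.
  - lra.
  - unfold tx, ty, bx, by'. vcases; field.
  - split.
    + apply (FT Fc HF tx ty); auto.
    + apply (FB Fc HF bx by'); auto.
Qed.

Lemma TB c1 s1 c2 s2 : top c1 s1 -> bot c2 s2 -> ST Fc c1 s1 -> SB Fc c2 s2 ->
  ~ (c1 = c2 /\ s1 = s2) -> ~ (c1 = 0 /\ s1 = 1 /\ c2 <= 0) -> ~ (c1 = 1 /\ s1 = 0 /\ c2 = -1) ->
  (forall c s, top c s -> ST Fc c s) /\ (forall c s, bot c s -> SB Fc c s).
Proof.
  intros T1 T2 S1 S2 N1 N2 N3.
  pose proof T1 as [A1 [B1 C1]]. pose proof T2 as [A2 B2].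
  assert (Hdot : c1*c2 + s1*s2 < 1).
  { assert (0 < (c1-c2)*(c1-c2) + (s1-s2)*(s1-s2)).
    { destruct (Req_dec c1 c2) as [e|e].
      - assert (s1 <> s2) by tauto. assert (0 < (s1-s2)*(s1-s2)) by (apply Rsqr_pos_lt; lra).
        pose proof (Rle_0_sqr (c1-c2)). unfold Rsqr in *. lra.
      - assert (0 < (c1-c2)*(c1-c2)) by (apply Rsqr_pos_lt; lra).
        pose proof (Rle_0_sqr (s1-s2)). unfold Rsqr in *. lra. }
    nra. }
  assert (Hs1 : c1 + s1 >= 1) by nra.
  destruct (Rlt_or_le 1 (c1 + s1)) as [G1|G1].
  -
    destruct (Req_dec s2 0) as [Z|Z].
    + assert (0 < s1) by (destruct C1 as [h|h]; auto; subst; nra).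
      apply (TB_core c1 s1 c2 s2 (c2 - c1) (s2 - s1) T1 T2 S1 S2); [nra|nra|left; lra|right; split; auto; lra].
    + assert (0 < s2) by (destruct B2 as [h|h]; auto; exfalso; apply Z; auto).
      apply (TB_core c1 s1 c2 s2 (c2 - c1) (s2 - s1) T1 T2 S1 S2); [nra|nra|left; lra|left; lra].
  - assert (E : c1 + s1 = 1) by lra.
    assert (Hcs : c1 * s1 = 0) by nra.
    destruct (Rmult_integral _ _ Hcs) as [Z|Z].
    +
      assert (s1 = 1) by lra. subst.
      destruct (Rlt_or_le 1 (c2 + s2)) as [G2|G2].
      * assert (Q4 : s2 > 0 \/ (s2 = 0 /\ s2 - 1 < 0)).
        { destruct (Req_dec s2 0) as [Z2|Z2]; [right; split; auto; lra|left; destruct B2 as [h|h]; auto; exfalso; apply Z2; auto]. }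
        apply (TB_core 0 1 c2 s2 (c2 - 0) (s2 - 1) T1 T2 S1 S2); [nra|nra|right; split; lra|exact Q4].
      * assert (0 < c2) by (destruct (Rle_or_lt c2 0) as [h|h]; auto; exfalso; apply N2; repeat split; auto).
        assert (s2 = 0) by nra. assert (c2 = 1) by nra. subst.
        apply (TB_core 0 1 1 0 2 (-1) T1 T2 S1 S2); lra.
    +
      assert (c1 = 1) by lra. subst.
      destruct (Rlt_or_le 1 (c2 + s2)) as [G2|G2].
      * assert (Q4 : s2 > 0).
        { destruct B2 as [h|h]; auto. subst. exfalso.
          assert ((c2-1)*(c2+1) = 0) by nra. destruct (Rmult_integral _ _ H) as [h|h]; lra. }
        apply (TB_core 1 0 c2 s2 (c2 - 1) (s2 - 0) T1 T2 S1 S2); [nra|nra|right; split; lra|left; lra].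
      * assert (Hs2 : 0 < s2).
        { destruct B2 as [h|h]; auto. subst. exfalso.
          assert ((c2-1)*(c2+1) = 0) by nra. destruct (Rmult_integral _ _ H) as [h|h].
          - apply N1. split; lra.
          - apply N3. repeat split; lra. }
        assert (c2 <= 0) by (destruct (Rle_or_lt c2 0) as [h|h]; auto; nra).
        apply (TB_core 1 0 c2 s2 (-1) 2 T1 T2 S1 S2); [lra|nra|lra|lra].
Qed.
End TBsec.

Definition ev (a0 a1 a2 a3 c s z : R) := a0*c + a1*s + a2*z + a3.
Definition Kgood (k0 k1 k2 k3 : R) :=
  (forall c s, top c s -> 0 <= ev k0 k1 k2 k3 c s 1) /\
  (forall c s, bot c s -> 0 <= ev k0 k1 k2 k3 c s (-1)).

Definition Mb (x0 x1 x2 x3 : R) := Rabs x0 + Rabs x1 + Rabs x2 + Rabs x3.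

Ltac absfacts x := pose proof (Rle_abs x); pose proof (Rle_abs (-x)); rewrite Rabs_Ropp in *.

Lemma Mb_ge x0 x1 x2 x3 : 0 <= Mb x0 x1 x2 x3.
Proof. unfold Mb. pose proof (Rabs_pos x0). pose proof (Rabs_pos x1). pose proof (Rabs_pos x2). pose proof (Rabs_pos x3). lra. Qed.

Lemma ev_bound x0 x1 x2 x3 c s z : -1 <= c <= 1 -> -1 <= s <= 1 -> -1 <= z <= 1 ->
  - Mb x0 x1 x2 x3 <= ev x0 x1 x2 x3 c s z.
Proof.
  intros. unfold Mb, ev.
  pose proof (Rle_abs x0) as a1. pose proof (Rle_abs (-x0)) as a2. rewrite Rabs_Ropp in a2.
  pose proof (Rle_abs x1) as b1. pose proof (Rle_abs (-x1)) as b2. rewrite Rabs_Ropp in b2.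
  pose proof (Rle_abs x2) as c1. pose proof (Rle_abs (-x2)) as c2. rewrite Rabs_Ropp in c2.
  pose proof (Rle_abs x3) as d1. pose proof (Rle_abs (-x3)) as d2. rewrite Rabs_Ropp in d2.
  assert (- Rabs x0 <= x0 * c) by nra.
  assert (- Rabs x1 <= x1 * s) by nra.
  assert (- Rabs x2 <= x2 * z) by nra.
  lra.
Qed.

Lemma top_bounds c s : top c s -> -1 <= c <= 1 /\ -1 <= s <= 1.
Proof. intros H. pose proof (top_facts c s H). destruct H as [? [? ?]]. lra. Qed.
Lemma bot_bounds c s : bot c s -> -1 <= c <= 1 /\ -1 <= s <= 1.
Proof. intros H. pose proof (bot_facts c s H). destruct H as [? ?]. lra. Qed.

Lemma c_zero : Kgood 0 0 0 0.
Proof. split; intros; unfold ev; lra. Qed.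

Lemma c_single v : 0 <= v -> Kgood 0 0 0 v.
Proof. split; intros; unfold ev; lra. Qed.

Lemma c_vert x0 x1 x2 x3 ca sa : 0 <= ev x0 x1 x2 x3 ca sa 1 -> 0 <= ev x0 x1 x2 x3 ca sa (-1) ->
  Kgood 0 0 x2 (x3 + (x0*ca + x1*sa)).
Proof. unfold ev; split; intros; unfold ev; lra. Qed.

Lemma c_top x0 x1 x2 x3 : (forall c s, top c s -> 0 <= ev x0 x1 x2 x3 c s 1) ->
  Kgood x0 x1 (x2 - Mb x0 x1 x2 x3) (x3 + Mb x0 x1 x2 x3).
Proof.
  intros H. split; intros c s Hcs.
  - specialize (H c s Hcs). unfold ev in *. lra.
  - destruct (bot_bounds c s Hcs) as [Bc Bs].
    pose proof (ev_bound x0 x1 x2 x3 c s (-1) Bc Bs ltac:(lra)) as EB. unfold ev in *. pose proof (Mb_ge x0 x1 x2 x3). lra.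
Qed.

Lemma c_bot x0 x1 x2 x3 : (forall c s, bot c s -> 0 <= ev x0 x1 x2 x3 c s (-1)) ->
  Kgood x0 x1 (x2 + Mb x0 x1 x2 x3) (x3 + Mb x0 x1 x2 x3).
Proof.
  intros H. split; intros c s Hcs.
  - destruct (top_bounds c s Hcs) as [Bc Bs].
    pose proof (ev_bound x0 x1 x2 x3 c s 1 Bc Bs ltac:(lra)) as EB. unfold ev in *. pose proof (Mb_ge x0 x1 x2 x3). lra.
  - specialize (H c s Hcs). unfold ev in *. lra.
Qed.

Lemma lin_lower x0 x1 u v w : 0 <= u <= w -> 0 <= v <= w ->
  - (Rabs x0 + Rabs x1) * w <= x0 * u + x1 * v.
Proof.
  intros. pose proof (Rle_abs x0) as a1. pose proof (Rle_abs (-x0)) as a2. rewrite Rabs_Ropp in a2.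
  pose proof (Rle_abs x1) as b1. pose proof (Rle_abs (-x1)) as b2. rewrite Rabs_Ropp in b2.
  pose proof (Rabs_pos x0). pose proof (Rabs_pos x1).
  assert (- Rabs x0 * w <= x0 * u) by nra.
  assert (- Rabs x1 * w <= x1 * v) by nra. lra.
Qed.

Lemma top_cs c s : top c s -> s <= c -> s <= 2 * (c + s - 1).
Proof.
  intros [H [Hc Hs]] Hle.
  assert ((c + s/2) * (c + s/2) >= 1) by nra.
  assert (c + s/2 >= 1) by (destruct (Rle_or_lt 1 (c + s/2)); [lra|nra]).
  lra.
Qed.
Lemma top_sc c s : top c s -> c <= s -> c <= 2 * (c + s - 1).
Proof.
  intros [H [Hc Hs]] Hle.
  assert ((s + c/2) * (s + c/2) >= 1) by nra.
  assert (s + c/2 >= 1) by (destruct (Rle_or_lt 1 (s + c/2)); [lra|nra]).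
  lra.
Qed.

Lemma c_T1 x0 x1 x2 x3 : 0 <= ev x0 x1 x2 x3 1 0 1 -> 0 <= ev x0 x1 x2 x3 1 0 (-1) ->
  0 <= ev x0 x1 x2 x3 (-1) 0 (-1) -> Kgood x0 (x1 + (Rabs x0 + Rabs x1)) x2 x3.
Proof.
  intros HP HPB HR. unfold ev in *. split; intros c s Hcs; unfold ev.
  - destruct (top_facts c s Hcs) as [? [? [? [? ?]]]]. destruct Hcs as [? [? ?]].
    pose proof (lin_lower (-x0) x1 (1 - c) s s) as LL. rewrite Rabs_Ropp in LL.
    assert (- (Rabs x0 + Rabs x1) * s <= - x0 * (1 - c) + x1 * s) by (apply LL; lra). nra.
  - destruct (bot_facts c s Hcs) as [? [? [? ?]]]. destruct Hcs as [? ?].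
    destruct (Rle_or_lt 0 c) as [h|h].
    + pose proof (lin_lower (-x0) x1 (1 - c) s s) as LL. rewrite Rabs_Ropp in LL.
      assert (- (Rabs x0 + Rabs x1) * s <= - x0 * (1 - c) + x1 * s) by (apply LL; lra). nra.
    + pose proof (lin_lower x0 x1 (1 + c) s s) as LL.
      assert (- (Rabs x0 + Rabs x1) * s <= x0 * (1 + c) + x1 * s) by (apply LL; lra). nra.
Qed.

Lemma lowP x0 x1 x2 x3 c s : top c s ->
  ev x0 x1 x2 x3 1 0 1 - (Rabs x0 + Rabs x1) * s <= ev x0 x1 x2 x3 c s 1.
Proof.
  intros Hcs. destruct (top_facts c s Hcs) as [? [? [? [? ?]]]]. destruct Hcs as [? [? ?]].
  pose proof (lin_lower (-x0) x1 (1 - c) s s) as LL. rewrite Rabs_Ropp in LL.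
  assert (- (Rabs x0 + Rabs x1) * s <= - x0 * (1 - c) + x1 * s) by (apply LL; lra).
  unfold ev. nra.
Qed.
Lemma lowQ x0 x1 x2 x3 c s : top c s ->
  ev x0 x1 x2 x3 0 1 1 - (Rabs x0 + Rabs x1) * c <= ev x0 x1 x2 x3 c s 1.
Proof.
  intros Hcs. destruct (top_facts c s Hcs) as [? [? [? [? ?]]]]. destruct Hcs as [? [? ?]].
  pose proof (lin_lower x0 (-x1) c (1 - s) c) as LL. rewrite Rabs_Ropp in LL.
  assert (- (Rabs x0 + Rabs x1) * c <= x0 * c + - x1 * (1 - s)) by (apply LL; lra).
  unfold ev. nra.
Qed.
Lemma lowR x0 x1 x2 x3 c s : bot c s ->
  ev x0 x1 x2 x3 (-1) 0 (-1) - (Rabs x0 + Rabs x1) * (c + s + 1) <= ev x0 x1 x2 x3 c s (-1).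
Proof.
  intros Hcs. destruct (bot_facts c s Hcs) as [? [? [? ?]]]. destruct Hcs as [? ?].
  pose proof (lin_lower x0 x1 (1 + c) s (c + s + 1)) as LL.
  assert (- (Rabs x0 + Rabs x1) * (c + s + 1) <= x0 * (1 + c) + x1 * s) by (apply LL; lra).
  unfold ev. nra.
Qed.

Lemma c_T2 x0 x1 x2 x3 : 0 <= ev x0 x1 x2 x3 1 0 1 -> 0 <= ev x0 x1 x2 x3 0 1 1 ->
  0 <= ev x0 x1 x2 x3 (-1) 0 (-1) ->
  Kgood (x0 + 2*(Rabs x0 + Rabs x1)) (x1 + 2*(Rabs x0 + Rabs x1)) (x2 - 2*(Rabs x0 + Rabs x1)) x3.
Proof.
  intros HP HQ HR. pose proof (Rabs_pos x0). pose proof (Rabs_pos x1).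
  set (lam := Rabs x0 + Rabs x1) in *. assert (Hlam : 0 <= lam) by (unfold lam; lra).
  split; intros c s Hcs.
  - assert (E : ev (x0 + 2*lam) (x1 + 2*lam) (x2 - 2*lam) x3 c s 1 =
      ev x0 x1 x2 x3 c s 1 + 2*lam*(c + s - 1)) by (unfold ev; ring).
    rewrite E. destruct (Rle_or_lt c s) as [h|h].
    + pose proof (top_sc c s Hcs h) as W1. pose proof (lowQ x0 x1 x2 x3 c s Hcs) as W2. fold lam in W2.
      assert (0 <= lam * (2*(c+s-1) - c)) by (apply Rmult_le_pos; lra). lra.
    + pose proof (top_cs c s Hcs ltac:(lra)) as W1. pose proof (lowP x0 x1 x2 x3 c s Hcs) as W2. fold lam in W2.
      assert (0 <= lam * (2*(c+s-1) - s)) by (apply Rmult_le_pos; lra). lra.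
  - assert (E : ev (x0 + 2*lam) (x1 + 2*lam) (x2 - 2*lam) x3 c s (-1) =
      ev x0 x1 x2 x3 c s (-1) + 2*lam*(c + s + 1)) by (unfold ev; ring).
    rewrite E. pose proof (lowR x0 x1 x2 x3 c s Hcs) as W2. fold lam in W2.
    destruct (bot_facts c s Hcs) as [? [? [? ?]]]. destruct Hcs as [? ?].
    assert (0 <= lam * (c+s+1)) by (apply Rmult_le_pos; lra). lra.
Qed.

Lemma c_chord x0 x1 x2 x3 : 0 <= ev x0 x1 x2 x3 1 0 1 -> 0 <= ev x0 x1 x2 x3 0 1 1 ->
  Kgood (x0 + 2*(Rabs x0 + Rabs x1)) (x1 + 2*(Rabs x0 + Rabs x1))
        (x2 - (Mb x0 x1 x2 x3 + 4*(Rabs x0 + Rabs x1)))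
        (x3 - 2*(Rabs x0 + Rabs x1) + (Mb x0 x1 x2 x3 + 4*(Rabs x0 + Rabs x1))).
Proof.
  intros HP HQ. pose proof (Rabs_pos x0). pose proof (Rabs_pos x1). pose proof (Mb_ge x0 x1 x2 x3).
  set (lam := Rabs x0 + Rabs x1) in *. assert (Hlam : 0 <= lam) by (unfold lam; lra). set (M := Mb x0 x1 x2 x3) in *.
  split; intros c s Hcs.
  - assert (E : ev (x0 + 2*lam) (x1 + 2*lam) (x2 - (M + 4*lam)) (x3 - 2*lam + (M + 4*lam)) c s 1 =
      ev x0 x1 x2 x3 c s 1 + 2*lam*(c + s - 1)) by (unfold ev; ring).
    rewrite E. destruct (Rle_or_lt c s) as [h|h].
    + pose proof (top_sc c s Hcs h) as W1. pose proof (lowQ x0 x1 x2 x3 c s Hcs) as W2. fold lam in W2.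
      assert (0 <= lam * (2*(c+s-1) - c)) by (apply Rmult_le_pos; lra). lra.
    + pose proof (top_cs c s Hcs ltac:(lra)) as W1. pose proof (lowP x0 x1 x2 x3 c s Hcs) as W2. fold lam in W2.
      assert (0 <= lam * (2*(c+s-1) - s)) by (apply Rmult_le_pos; lra). lra.
  - assert (E : ev (x0 + 2*lam) (x1 + 2*lam) (x2 - (M + 4*lam)) (x3 - 2*lam + (M + 4*lam)) c s (-1) =
      ev x0 x1 x2 x3 c s (-1) + 2*lam*(c + s - 1) + 2 * (M + 4*lam)) by (unfold ev; ring).
    rewrite E. destruct (bot_bounds c s Hcs) as [Bc Bs].
    pose proof (ev_bound x0 x1 x2 x3 c s (-1) Bc Bs ltac:(lra)) as W2. fold M in W2. nra.
Qed.

Lemma c_diam x0 x1 x2 x3 : 0 <= ev x0 x1 x2 x3 1 0 (-1) -> 0 <= ev x0 x1 x2 x3 (-1) 0 (-1) ->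
  Kgood x0 (x1 + (Rabs x0 + Rabs x1)) (x2 + Mb x0 x1 x2 x3) (x3 + Mb x0 x1 x2 x3).
Proof.
  intros HPB HR. pose proof (Rabs_pos x0). pose proof (Rabs_pos x1). pose proof (Mb_ge x0 x1 x2 x3).
  split; intros c s Hcs.
  - destruct (top_bounds c s Hcs) as [Bc Bs].
    pose proof (ev_bound x0 x1 x2 x3 c s 1 Bc Bs ltac:(lra)). destruct Hcs as [? [? ?]].
    unfold ev in *. nra.
  - destruct (bot_facts c s Hcs) as [? [? [? ?]]]. destruct Hcs as [? ?]. unfold ev in *.
    destruct (Rle_or_lt 0 c) as [h|h].
    + pose proof (lin_lower (-x0) x1 (1 - c) s s) as LL. rewrite Rabs_Ropp in LL.
      assert (- (Rabs x0 + Rabs x1) * s <= - x0 * (1 - c) + x1 * s) by (apply LL; lra). nra.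
    + pose proof (lin_lower x0 x1 (1 + c) s s) as LL.
      assert (- (Rabs x0 + Rabs x1) * s <= x0 * (1 + c) + x1 * s) by (apply LL; lra). nra.
Qed.

Lemma c_PR x0 x1 x2 x3 : 0 <= ev x0 x1 x2 x3 1 0 1 -> 0 <= ev x0 x1 x2 x3 (-1) 0 (-1) ->
  Kgood (x0 + (Rabs x0 + Rabs x1)) (x1 + 2*(Rabs x0 + Rabs x1)) (x2 - (Rabs x0 + Rabs x1)) x3.
Proof.
  intros HP HR. pose proof (Rabs_pos x0). pose proof (Rabs_pos x1).
  set (lam := Rabs x0 + Rabs x1) in *. assert (Hlam : 0 <= lam) by (unfold lam; lra).
  split; intros c s Hcs.
  - assert (E : ev (x0 + lam) (x1 + 2*lam) (x2 - lam) x3 c s 1 =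
      ev x0 x1 x2 x3 c s 1 + lam * s + lam*(c + s - 1)) by (unfold ev; ring).
    rewrite E. pose proof (lowP x0 x1 x2 x3 c s Hcs) as W2. fold lam in W2.
    destruct (top_facts c s Hcs) as [? [? [? [? ?]]]]. nra.
  - assert (E : ev (x0 + lam) (x1 + 2*lam) (x2 - lam) x3 c s (-1) =
      ev x0 x1 x2 x3 c s (-1) + lam * (c + s + 1) + lam * s) by (unfold ev; ring).
    rewrite E. pose proof (lowR x0 x1 x2 x3 c s Hcs) as W2. fold lam in W2.
    destruct Hcs as [? ?]. nra.
Qed.

Lemma c_cone x0 x1 x2 x3 cb sb : bot cb sb -> cb <= 0 ->
  0 <= ev x0 x1 x2 x3 0 1 1 -> 0 <= ev x0 x1 x2 x3 cb sb (-1) ->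
  Kgood (-cb) (-sb) ((sb + ev x0 x1 x2 x3 0 1 1 - 1 - ev x0 x1 x2 x3 cb sb (-1))/2)
        ((sb + ev x0 x1 x2 x3 0 1 1 + 1 + ev x0 x1 x2 x3 cb sb (-1))/2).
Proof.
  intros [Hb Hsb] Hcb HQ Hv.
  set (vQ := ev x0 x1 x2 x3 0 1 1) in *. set (vb := ev x0 x1 x2 x3 cb sb (-1)) in *.
  split; intros c s Hcs; unfold ev.
  - destruct (top_facts c s Hcs) as [? [? _]]. destruct Hcs as [? [? ?]]. nra.
  - destruct Hcs as [? ?].
    assert (cb*c + sb*s <= 1).
    { pose proof (Rle_0_sqr (cb - c)). pose proof (Rle_0_sqr (sb - s)). unfold Rsqr in *. nra. }
    lra.
Qed.

Section Main.
Variable Fc : VSet.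
Hypothesis HF : face 4 K_ex Fc.

Lemma msum_from_k x k0 k1 k2 k3 : inRn 4 x -> Kgood k0 k1 k2 k3 ->
  (forall c s, top c s -> ST Fc c s -> ev k0 k1 k2 k3 c s 1 = ev (x 0%nat) (x 1%nat) (x 2%nat) (x 3%nat) c s 1) ->
  (forall c s, bot c s -> SB Fc c s -> ev k0 k1 k2 k3 c s (-1) = ev (x 0%nat) (x 1%nat) (x 2%nat) (x 3%nat) c s (-1)) ->
  msum (dual 4 K_ex) (perp 4 Fc) x.
Proof.
  intros Hx [Kt Kb] Et Eb.
  set (a := vec4 k0 k1 k2 k3).
  exists a, (vadd x (vscale (-1) a)). split; [|split].
  - split; [apply inRn4_vec4|]. apply K_valid.
    + intros c s H. specialize (Kt c s H). unfold ev in Kt. simpl. lra.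
    + intros c s H. specialize (Kb c s H). unfold ev in Kb. simpl. lra.
  - split.
    + intros i Hi. unfold vadd, vscale. rewrite Hx by auto. unfold a. rewrite inRn4_vec4 by auto. ring.
    + apply (perp_gens Fc HF). intros g Hg HFg. rewrite ip_comm, ip_add, ip_scale.
      destruct (gamma_inv g Hg) as [c [s [[T ->]|[T ->]]]].
      * specialize (Et c s T HFg). unfold ev in Et. simpl. simpl in Et. lra.
      * specialize (Eb c s T HFg). unfold ev in Eb. simpl. simpl in Eb. lra.
  - apply vext; intro i; unfold vadd, vscale; ring.
Qed.

Lemma Fstar x w : closure 4 (msum (dual 4 K_ex) (perp 4 Fc)) x -> Fc w -> ip 4 x w >= 0.
Proof.
  intros Hx Hw. rewrite ip_comm. eapply (closure_ge 4 w _ x); [|exact Hx].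
  intros y [a [b [[_ Ha] [[_ Hb] ->]]]].
  rewrite ip_add. rewrite (ip_comm 4 w a), (ip_comm 4 w b).
  specialize (Ha w (Fsub Fc HF w Hw)). specialize (Hb w Hw). lra.
Qed.

Lemma F_lincomb l : Fc vzero -> Forall (fun p => 0 <= fst p /\ Fc (snd p)) l -> Fc (lincomb l).
Proof.
  intros H0. induction 1 as [|[a e] l [Ha He] Hf IH]; simpl; auto.
  apply (Fadd Fc HF); auto. apply (Fscale Fc HF); auto.
Qed.

Lemma allTB : (forall c s, top c s -> ST Fc c s) -> (forall c s, bot c s -> SB Fc c s) ->
  set_eq Fc K_ex.
Proof.
  intros AT AB w. split; [apply (Fsub Fc HF)|].
  intros Kw.
  assert (F0 : Fc vzero).
  { replace vzero with (vscale 0 (vec4 1 0 1 1)) by (apply vext; intro; unfold vscale, vzero; ring).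
    apply (Fscale Fc HF); [lra|]. apply AT. split; lra. }
  apply Kchar in Kw. destruct Kw as [lam [c [Hl [[l [Hf [Hs ->]]] ->]]]].
  assert (E : vscale lam (L (lincomb l)) = lincomb (lmapL lam l)).
  { rewrite lincomb_lmapL, Hs. reflexivity. }
  rewrite E. apply F_lincomb; auto.
  clear -Hf Hl AT AB. induction Hf as [|[a e] l [H0 He] Hf IH]; simpl; constructor; auto.
  simpl. split; [apply Rmult_le_pos; auto|].
  destruct (gamma_inv e He) as [c [s [[T ->]|[T ->]]]]; [apply AT|apply AB]; auto.
Qed.
End Main.

Section Class.
Variable Fc : VSet.
Hypothesis HF : face 4 K_ex Fc.
Hypothesis Hneq : ~ set_eq Fc K_ex.
Variables x0 x1 x2 x3 : R.
Hypothesis Hst : forall c s, top c s -> ST Fc c s -> 0 <= ev x0 x1 x2 x3 c s 1.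
Hypothesis Hsb : forall c s, bot c s -> SB Fc c s -> 0 <= ev x0 x1 x2 x3 c s (-1).

Definition goodk k0 k1 k2 k3 := Kgood k0 k1 k2 k3 /\
  (forall c s, top c s -> ST Fc c s -> ev k0 k1 k2 k3 c s 1 = ev x0 x1 x2 x3 c s 1) /\
  (forall c s, bot c s -> SB Fc c s -> ev k0 k1 k2 k3 c s (-1) = ev x0 x1 x2 x3 c s (-1)).

Let AT := forall c s, top c s -> ST Fc c s.
Let AB := forall c s, bot c s -> SB Fc c s.

Lemma top35 : top (3/5) (4/5). Proof. split; [field|split]; lra. Qed.
Lemma top45 : top (4/5) (3/5). Proof. split; [field|split]; lra. Qed.
Lemma bot35 : bot (3/5) (4/5). Proof. split; [field|]; lra. Qed.
Lemma bot45 : bot (4/5) (3/5). Proof. split; [field|]; lra. Qed.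

Lemma noB_of_AT : AT -> forall c s, bot c s -> ~ SB Fc c s.
Proof.
  intros Ht c2 s2 B2 S2. apply Hneq. apply (allTB Fc HF); auto.
  destruct (classic (c2 = 3/5 /\ s2 = 4/5)) as [E|E].
  - destruct E as [-> ->].
    apply (TB Fc HF (4/5) (3/5) (3/5) (4/5) top45 B2 (Ht _ _ top45) S2); lra.
  - apply (TB Fc HF (3/5) (4/5) c2 s2 top35 B2 (Ht _ _ top35) S2).
    + intros [? ?]; apply E; split; auto.
    + lra.
    + lra.
Qed.

Lemma noT_of_AB : AB -> forall c s, top c s -> ~ ST Fc c s.
Proof.
  intros Hb c1 s1 T1 S1. apply Hneq. apply (allTB Fc HF); auto.
  destruct (classic (c1 = 3/5 /\ s1 = 4/5)) as [E|E].
  - destruct E as [-> ->].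
    apply (TB Fc HF (3/5) (4/5) (4/5) (3/5) T1 bot45 S1 (Hb _ _ bot45)); lra.
  - apply (TB Fc HF c1 s1 (3/5) (4/5) T1 bot35 S1 (Hb _ _ bot35)).
    + intros [? ?]; apply E; split; auto.
    + lra.
    + lra.
Qed.

Lemma D1 : ~ AT -> forall c1 s1 c2 s2, top c1 s1 -> top c2 s2 -> ST Fc c1 s1 -> ST Fc c2 s2 ->
  (c1 = c2 /\ s1 = s2) \/ (c1 = 1 /\ s1 = 0 /\ c2 = 0 /\ s2 = 1) \/ (c1 = 0 /\ s1 = 1 /\ c2 = 1 /\ s2 = 0).
Proof.
  intros nAT c1 s1 c2 s2 T1 T2 S1 S2.
  destruct (classic (c1 = c2 /\ s1 = s2)) as [E1|E1]; [left; auto|].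
  destruct (classic (c1 = 1 /\ s1 = 0 /\ c2 = 0 /\ s2 = 1)) as [E2|E2]; [right; left; auto|].
  destruct (classic (c1 = 0 /\ s1 = 1 /\ c2 = 1 /\ s2 = 0)) as [E3|E3]; [right; right; auto|].
  exfalso. apply nAT. exact (TT Fc HF c1 s1 c2 s2 T1 T2 S1 S2 E1 E2 E3).
Qed.

Lemma D2 : ~ AB -> forall c1 s1 c2 s2, bot c1 s1 -> bot c2 s2 -> SB Fc c1 s1 -> SB Fc c2 s2 ->
  (c1 = c2 /\ s1 = s2) \/ (s1 = 0 /\ s2 = 0).
Proof.
  intros nAB c1 s1 c2 s2 T1 T2 S1 S2.
  destruct (classic (c1 = c2 /\ s1 = s2)) as [E1|E1]; [left; auto|].
  destruct (classic (s1 = 0 /\ s2 = 0)) as [E2|E2]; [right; auto|].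
  exfalso. apply nAB. exact (BB Fc HF c1 s1 c2 s2 T1 T2 S1 S2 E1 E2).
Qed.

Lemma D3 : ~ AT -> forall c1 s1 c2 s2, top c1 s1 -> bot c2 s2 -> ST Fc c1 s1 -> SB Fc c2 s2 ->
  (c1 = c2 /\ s1 = s2) \/ (c1 = 0 /\ s1 = 1 /\ c2 <= 0) \/ (c1 = 1 /\ s1 = 0 /\ c2 = -1).
Proof.
  intros nAT c1 s1 c2 s2 T1 T2 S1 S2.
  destruct (classic (c1 = c2 /\ s1 = s2)) as [E1|E1]; [left; auto|].
  destruct (classic (c1 = 0 /\ s1 = 1 /\ c2 <= 0)) as [E2|E2]; [right; left; auto|].
  destruct (classic (c1 = 1 /\ s1 = 0 /\ c2 = -1)) as [E3|E3]; [right; right; auto|].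
  exfalso. apply nAT. exact (proj1 (TB Fc HF c1 s1 c2 s2 T1 T2 S1 S2 E1 E2 E3)).
Qed.

Lemma bot_s0 c s : bot c s -> s = 0 -> c = 1 \/ c = -1.
Proof.
  intros [H _] ->. assert ((c-1)*(c+1) = 0) by nra.
  destruct (Rmult_integral _ _ H0); [left|right]; lra.
Qed.
Lemma bot_c1 c s : bot c s -> c = 1 \/ c = -1 -> s = 0.
Proof. intros [H Hs] [->| ->]; nra. Qed.

Lemma topP : top 1 0. Proof. split; [ring|split]; lra. Qed.
Lemma topQ : top 0 1. Proof. split; [ring|split]; lra. Qed.
Lemma botP : bot 1 0. Proof. split; [ring|]; lra. Qed.
Lemma botR : bot (-1) 0. Proof. split; [ring|]; lra. Qed.

Lemma main_k : exists k0 k1 k2 k3, goodk k0 k1 k2 k3.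
Proof.
  set (M := Mb x0 x1 x2 x3).
  destruct (classic AT) as [HAT|nAT].
  { exists x0, x1, (x2 - M), (x3 + M). split; [apply c_top; intros; apply Hst; auto; apply HAT; auto|]. split.
    - intros; unfold ev; ring.
    - intros c s B S; exfalso; exact (noB_of_AT HAT c s B S). }
  destruct (classic AB) as [HAB|nAB].
  { exists x0, x1, (x2 + M), (x3 + M). split; [apply c_bot; intros; apply Hsb; auto; apply HAB; auto|]. split.
    - intros c s T S; exfalso; exact (noT_of_AB HAB c s T S).
    - intros; unfold ev; ring. }
  pose proof (D1 nAT) as d1. pose proof (D2 nAB) as d2. pose proof (D3 nAT) as d3.
  destruct (classic (exists c s, top c s /\ ST Fc c s)) as [[c1 [s1 [T1 S1]]]|nT];
  destruct (classic (exists c s, bot c s /\ SB Fc c s)) as [[c2 [s2 [B2 S2]]]|nB].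
  -
    destruct (classic (exists c s, top c s /\ ST Fc c s /\ ~(c = c1 /\ s = s1))) as [[c3 [s3 [T3 [S3 N3]]]]|nU].
    + (* chord present: T2 face *)
      assert (SPQ : ST Fc 1 0 /\ ST Fc 0 1).
      { destruct (d1 c1 s1 c3 s3 T1 T3 S1 S3) as [[? ?]|[[? [? [? ?]]]|[? [? [? ?]]]]].
        - exfalso; apply N3; split; auto.
        - subst; auto.
        - subst; auto. }
      destruct SPQ as [SP SQ].
      assert (UT : forall c s, top c s -> ST Fc c s -> c + s = 1).
      { intros c s T S. destruct (d1 1 0 c s topP T SP S) as [[? ?]|[[? [? [? ?]]]|[? [? [? ?]]]]]; lra. }
      assert (UB : forall c s, bot c s -> SB Fc c s -> c = -1 /\ s = 0).
      { intros c s B S.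
        assert (c = -1).
        { destruct (d3 1 0 c s topP B SP S) as [[? ?]|[[? [? ?]]|[? [? ?]]]]; try lra.
          destruct (d3 0 1 c s topQ B SQ S) as [[? ?]|[[? [? ?]]|[? [? ?]]]]; lra. }
        split; auto. apply (bot_c1 c s B); auto. }
      destruct (UB c2 s2 B2 S2) as [-> ->].
      pose proof (Hst 1 0 topP SP). pose proof (Hst 0 1 topQ SQ). pose proof (Hsb (-1) 0 botR S2).
      eexists; eexists; eexists; eexists. unfold goodk. split; [apply (c_T2 x0 x1 x2 x3); auto|]. split.
      * intros c s T S. specialize (UT c s T S). unfold ev. nra.
      * intros c s B S. destruct (UB c s B S) as [-> ->]. unfold ev. ring.
    + assert (UT : forall c s, top c s -> ST Fc c s -> c = c1 /\ s = s1).
      { intros c s T S. apply NNPP. intro N. apply nU. exists c, s. auto. }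
      destruct (classic (exists c s, bot c s /\ SB Fc c s /\ ~(c = c2 /\ s = s2))) as [[c4 [s4 [B4 [S4 N4]]]]|nV].
      * (* diameter present: T1 face *)
        assert (Hs : s2 = 0 /\ s4 = 0).
        { destruct (d2 c2 s2 c4 s4 B2 B4 S2 S4) as [[? ?]|?]; auto. exfalso; apply N4; split; auto. }
        destruct Hs as [Hs2 Hs4]. subst s2 s4.
        assert (SPR : SB Fc 1 0 /\ SB Fc (-1) 0).
        { destruct (bot_s0 c2 0 B2 eq_refl) as [E2|E2]; destruct (bot_s0 c4 0 B4 eq_refl) as [E4|E4]; subst.
          - exfalso; apply N4; auto.
          - auto.
          - auto.
          - exfalso; apply N4; auto. }
        destruct SPR as [SP SR].
        assert (c1 = 1 /\ s1 = 0) as [-> ->].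
        { destruct (d3 c1 s1 1 0 T1 botP S1 SP) as [[? ?]|[[? [? ?]]|[? [? ?]]]]; try lra; split; auto. }
        pose proof (Hst 1 0 topP S1). pose proof (Hsb 1 0 botP SP). pose proof (Hsb (-1) 0 botR SR).
        eexists; eexists; eexists; eexists. unfold goodk. split; [apply (c_T1 x0 x1 x2 x3); auto|]. split.
        -- intros c s T S. destruct (UT c s T S) as [-> ->]. unfold ev. ring.
        -- intros c s B S. assert (s = 0).
           { destruct (d2 1 0 c s botP B SP S) as [[? ?]|[? ?]]; auto. }
           subst. unfold ev. ring.
      * assert (UB : forall c s, bot c s -> SB Fc c s -> c = c2 /\ s = s2).
        { intros c s T S. apply NNPP. intro N. apply nV. exists c, s. auto. }
        pose proof (Hst c1 s1 T1 S1) as V1. pose proof (Hsb c2 s2 B2 S2) as V2.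
        destruct (d3 c1 s1 c2 s2 T1 B2 S1 S2) as [[E1 E2]|[[E1 [E2 E3]]|[E1 [E2 E3]]]].
        --
           subst c2 s2.
           exists 0, 0, x2, (x3 + (x0*c1 + x1*s1)). split; [apply c_vert; auto|]. split.
           ++ intros c s T S. destruct (UT c s T S) as [-> ->]. unfold ev. ring.
           ++ intros c s B S. destruct (UB c s B S) as [-> ->]. unfold ev. ring.
        --
           subst c1 s1.
           pose proof B2 as [Bn Bs].
           eexists; eexists; eexists; eexists. unfold goodk. split; [apply (c_cone x0 x1 x2 x3 c2 s2); auto|]. split.
           ++ intros c s T S. destruct (UT c s T S) as [-> ->]. unfold ev. field.
           ++ intros c s B S. destruct (UB c s B S) as [-> ->]. unfold ev.
              field_simplify. nra.
        --
           subst c1 s1 c2. assert (s2 = 0) by (apply (bot_c1 (-1) s2 B2); auto). subst s2.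
           eexists; eexists; eexists; eexists. unfold goodk. split; [apply (c_PR x0 x1 x2 x3); auto|]. split.
           ++ intros c s T S. destruct (UT c s T S) as [-> ->]. unfold ev. ring.
           ++ intros c s B S. destruct (UB c s B S) as [-> ->]. unfold ev. ring.
  -
    destruct (classic (exists c s, top c s /\ ST Fc c s /\ ~(c = c1 /\ s = s1))) as [[c3 [s3 [T3 [S3 N3]]]]|nU].
    + assert (SPQ : ST Fc 1 0 /\ ST Fc 0 1).
      { destruct (d1 c1 s1 c3 s3 T1 T3 S1 S3) as [[? ?]|[[? [? [? ?]]]|[? [? [? ?]]]]].
        - exfalso; apply N3; split; auto.
        - subst; auto.
        - subst; auto. }
      destruct SPQ as [SP SQ].
      assert (UT : forall c s, top c s -> ST Fc c s -> c + s = 1).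
      { intros c s T S. destruct (d1 1 0 c s topP T SP S) as [[? ?]|[[? [? [? ?]]]|[? [? [? ?]]]]]; lra. }
      pose proof (Hst 1 0 topP SP). pose proof (Hst 0 1 topQ SQ).
      eexists; eexists; eexists; eexists. unfold goodk. split; [apply (c_chord x0 x1 x2 x3); auto|]. split.
      * intros c s T S. specialize (UT c s T S). unfold ev. nra.
      * intros c s B S. exfalso; apply nB; exists c, s; auto.
    + assert (UT : forall c s, top c s -> ST Fc c s -> c = c1 /\ s = s1).
      { intros c s T S. apply NNPP. intro N. apply nU. exists c, s. auto. }
      exists 0, 0, 0, (ev x0 x1 x2 x3 c1 s1 1). split; [apply c_single; auto|]. split.
      * intros c s T S. destruct (UT c s T S) as [-> ->]. unfold ev. ring.
      * intros c s B S. exfalso; apply nB; exists c, s; auto.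
  -
    destruct (classic (exists c s, bot c s /\ SB Fc c s /\ ~(c = c2 /\ s = s2))) as [[c4 [s4 [B4 [S4 N4]]]]|nV].
    + assert (Hs : s2 = 0 /\ s4 = 0).
      { destruct (d2 c2 s2 c4 s4 B2 B4 S2 S4) as [[? ?]|?]; auto. exfalso; apply N4; split; auto. }
      destruct Hs as [Hs2 Hs4]. subst s2 s4.
      assert (SPR : SB Fc 1 0 /\ SB Fc (-1) 0).
      { destruct (bot_s0 c2 0 B2 eq_refl) as [E2|E2]; destruct (bot_s0 c4 0 B4 eq_refl) as [E4|E4]; subst.
        - exfalso; apply N4; auto.
        - auto.
        - auto.
        - exfalso; apply N4; auto. }
      destruct SPR as [SP SR].
      pose proof (Hsb 1 0 botP SP). pose proof (Hsb (-1) 0 botR SR).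
      eexists; eexists; eexists; eexists. unfold goodk. split; [apply (c_diam x0 x1 x2 x3); auto|]. split.
      * intros c s T S. exfalso; apply nT; exists c, s; auto.
      * intros c s B S. assert (s = 0).
        { destruct (d2 1 0 c s botP B SP S) as [[? ?]|[? ?]]; auto. }
        subst. unfold ev. ring.
    + assert (UB : forall c s, bot c s -> SB Fc c s -> c = c2 /\ s = s2).
      { intros c s T S. apply NNPP. intro N. apply nV. exists c, s. auto. }
      exists 0, 0, 0, (ev x0 x1 x2 x3 c2 s2 (-1)). split; [apply c_single; auto|]. split.
      * intros c s T S. exfalso; apply nT; exists c, s; auto.
      * intros c s B S. destruct (UB c s B S) as [-> ->]. unfold ev. ring.
  - exists 0, 0, 0, 0. split; [apply c_zero|]. split.
    + intros c s T S. exfalso; apply nT; exists c, s; auto.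
    + intros c s B S. exfalso; apply nB; exists c, s; auto.
Qed.
End Class.

Lemma part1 : facially_dual_complete 4 K_ex.
Proof.
  intros Fc HF Hne Hneq x Hx.
  assert (Ix : inRn 4 x) by (destruct Hx; auto).
  assert (Hstar : forall w, Fc w -> ip 4 x w >= 0) by (intros; apply (Fstar Fc HF); auto).
  assert (Hst : forall c s, top c s -> ST Fc c s -> 0 <= ev (x 0%nat) (x 1%nat) (x 2%nat) (x 3%nat) c s 1).
  { intros c s _ S. specialize (Hstar _ S). simpl in Hstar. unfold ev. lra. }
  assert (Hsb : forall c s, bot c s -> SB Fc c s -> 0 <= ev (x 0%nat) (x 1%nat) (x 2%nat) (x 3%nat) c s (-1)).
  { intros c s _ S. specialize (Hstar _ S). simpl in Hstar. unfold ev. lra. }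
  destruct (main_k Fc HF Hneq _ _ _ _ Hst Hsb) as [k0 [k1 [k2 [k3 [Kg [Et Eb]]]]]].
  apply (msum_from_k Fc HF x k0 k1 k2 k3); auto.
Qed.

Theorem mainTheorem8 :
  facially_dual_complete 4 K_ex /\
  ~ facially_exposed 3 (tangent 3 xbar C_ex) /\
  ~ strongly_tangentially_exposed 4 K_ex.
Proof.
  split; [exact part1|split; [exact part2|exact part3]].
Qed.
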